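(* There exists a computable (2,1):1 structure $\mathcal{A}=(\omega,f)$ with no $\mathbb{Z}$-chains such that $\beta_{\mathcal{A}}$ and $iso_{\mathcal{A}}$ are computable, but $\mathcal{A}$ is not computably categorical; that is, there is a computable (2,1):1 structure $\mathcal{B}=(\omega,g)$ isomorphic to $\mathcal{A}$ such that no computable function is an isomorphism from $\mathcal{A}$ onto $\mathcal{B}$. (Necessarily such $\mathcal{A}$ has infinitely many $k$-cycles for some $k$; the example given consists entirely of $1$-cycles.)
   Context: A (2,1):1 structure is a pair $\mathcal{A}=(A,f)$ with $A$ a countable set and $f:A\to A$ such that $|f^{-1}(a)|\in\{1,2\}$ for every $a\in A$; it is computable if $A$ is a computable set and $f$ is computable. An element $x$ is cyclic if $f^n(x)=x$ for some $n>0$. The orbit of $x$ is $\{y:\exists m,n\ (f^m(x)=f^n(y))\}$. An orbit containing a directed cycle with exactly $k$ elements is a $k$-cycle; an orbit containing no cyclic element is a $\mathbb{Z}$-chain. The branching function is $\beta_{\mathcal{A}}(x)=|f^{-1}(x)|\in\{1,2\}$ and $\Lambda_{\mathcal{A}}=\{x:\beta_{\mathcal{A}}(x)=2\}$. For $x\in A$, $Tree_{\mathcal{A}}(x)$ is the directed graph with vertex set $\{a:\exists n\ge0\,(f^n(a)=x)\}$ and edges $(a,f(a))$ between such vertices. The branch isomorphism function $iso_{\mathcal{A}}:\Lambda_{\mathcal{A}}\to\{0,1\}$ is given, for $x\in\Lambda_{\mathcal{A}}$ with distinct pre-images $x_1,x_2$, by $iso_{\mathcal{A}}(x)=1$ iff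 $Tree_{\mathcal{A}}(x_1)\cong Tree_{\mathcal{A}}(x_2)$; it is computable if it is the restriction to $\Lambda_{\mathcal{A}}$ of a partial computable function. A computable structure is computably categorical if any two computable structures isomorphic to it are computably isomorphic. *)

(* Defs.v *)
From Stdlib Require Import Arith List.
Import ListNotations.

Inductive code : Type :=
| Zero : code
| Succ : code
| Proj : nat -> code
| Comp : code -> list code -> code
| Prec : code -> code -> code
| Mu   : code -> code.

Inductive eval : code -> list nat -> nat -> Prop :=
| eval_zero : forall v, eval Zero v 0
| eval_succ : forall x v, eval Succ (x :: v) (S x)
| eval_proj : forall i v, i < length v -> eval (Proj i) v (nth i v 0)
| eval_comp : forall h gs v ys y,
    evals gs v ys -> eval h ys y -> eval (Comp h gs) v y
| eval_prec0 : forall b s v y, eval b v y -> eval (Prec b s) (0 :: v) y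
| eval_precS : forall b s n v r y,
    eval (Prec b s) (n :: v) r -> eval s (n :: r :: v) y ->
    eval (Prec b s) (S n :: v) y
| eval_mu : forall c v n,
    eval c (n :: v) 0 ->
    (forall m, m < n -> exists k, eval c (m :: v) (S k)) ->
    eval (Mu c) v n
with evals : list code -> list nat -> list nat -> Prop :=
| evals_nil : forall v, evals [] v []
| evals_cons : forall g gs v y ys,
    eval g v y -> evals gs v ys -> evals (g :: gs) v (y :: ys).

Definition computable (h : nat -> nat) : Prop :=
  exists c, forall x, eval c [x] (h x).

Fixpoint iter (f : nat -> nat) (n : nat) (x : nat) : nat :=
  match n with 0 => x | S k => f (iter f k x) end.

Definition preimg_count (f : nat -> nat) (a k : nat) : Prop :=
  exists l : list nat, NoDup l /\ length l = k /\ (forall y, f y = a <-> In y l).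

Definition is_21_1 (f : nat -> nat) : Prop :=
  forall a, preimg_count f a 1 \/ preimg_count f a 2.

Definition cyclic (f : nat -> nat) (x : nat) : Prop :=
  exists n, 0 < n /\ iter f n x = x.

Definition same_orbit (f : nat -> nat) (x y : nat) : Prop :=
  exists m n, iter f m x = iter f n y.

(** a Z-chain is an orbit with no cyclic element *)
Definition no_Z_chains (f : nat -> nat) : Prop :=
  forall x, exists y, same_orbit f x y /\ cyclic f y.

Definition beta_computable (f : nat -> nat) : Prop :=
  exists b, computable b /\ forall a, preimg_count f a (b a).

Definition in_Lambda (f : nat -> nat) (x : nat) : Prop := preimg_count f x 2.

Definition in_tree (f : nat -> nat) (x a : nat) : Prop :=
  exists n, iter f n a = x.

Definition tree_edge (f : nat -> nat) (x a b : nat) : Prop :=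
  in_tree f x a /\ in_tree f x b /\ f a = b.

Definition tree_iso (f : nat -> nat) (x1 x2 : nat) : Prop :=
  exists h : nat -> nat,
    (forall a, in_tree f x1 a -> in_tree f x2 (h a)) /\
    (forall a b, in_tree f x1 a -> in_tree f x1 b -> h a = h b -> a = b) /\
    (forall c, in_tree f x2 c -> exists a, in_tree f x1 a /\ h a = c) /\
    (forall a b, in_tree f x1 a -> in_tree f x1 b ->
       (tree_edge f x1 a b <-> tree_edge f x2 (h a) (h b))).

(** iso_A is computable: it is the restriction to Lambda_A of a partial
    computable function (code c). *)
Definition iso_computable (f : nat -> nat) : Prop :=
  exists c, forall x, in_Lambda f x ->
    forall x1 x2, x1 <> x2 -> f x1 = x -> f x2 = x ->
      exists v, eval c [x] v /\ (v = 0 \/ v = 1) /\ (v = 1 <-> tree_iso f x1 x2).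

Definition struct_iso (f g : nat -> nat) (h : nat -> nat) : Prop :=
  (forall a b, h a = h b -> a = b) /\ (forall c, exists a, h a = c) /\
  (forall x, h (f x) = g (h x)).

(* Main.v *)
Require Import Defs.
From Stdlib Require Import Arith List Lia Setoid Morphisms FunctionalExtensionality Classical ClassicalEpsilon.
Import ListNotations.

Inductive ex : Type :=
| V : nat -> ex
| K : nat -> ex
| Su : ex -> ex
| Rec : ex -> ex -> ex -> ex
| C1 : ex -> ex -> ex
| C2 : ex -> ex -> ex -> ex
| C3 : ex -> ex -> ex -> ex -> ex.

Fixpoint den (e : ex) (v : list nat) : nat :=
  match e with
  | V i => nth i v 0
  | K n => n
  | Su a => S (den a v)
  | Rec n z s => nat_rect (fun _ => nat) (den z v) (fun k r => den s (r :: k :: v)) (den n v)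
  | C1 b a => den b [den a v]
  | C2 b a1 a2 => den b [den a1 v; den a2 v]
  | C3 b a1 a2 a3 => den b [den a1 v; den a2 v; den a3 v]
  end.

Fixpoint wf (m : nat) (e : ex) : bool :=
  match e with
  | V i => i <? m
  | K _ => true
  | Su a => wf m a
  | Rec n z s => wf m n && wf m z && wf (S (S m)) s
  | C1 b a => wf 1 b && wf m a
  | C2 b a1 a2 => wf 2 b && wf m a1 && wf m a2
  | C3 b a1 a2 a3 => wf 3 b && wf m a1 && wf m a2 && wf m a3
  end.

Fixpoint kcode (n : nat) : code :=
  match n with 0 => Zero | S k => Comp Succ [kcode k] end.

Fixpoint projs (a m : nat) : list code :=
  match m with 0 => [] | S m' => Proj a :: projs (S a) m' end.

Fixpoint comp (m : nat) (e : ex) : code :=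
  match e with
  | V i => Proj i
  | K n => kcode n
  | Su a => Comp Succ [comp m a]
  | Rec n z s => Comp (Prec (comp m z) (Comp (comp (S (S m)) s) (Proj 1 :: Proj 0 :: projs 2 m)))
                      (comp m n :: projs 0 m)
  | C1 b a => Comp (comp 1 b) [comp m a]
  | C2 b a1 a2 => Comp (comp 2 b) [comp m a1; comp m a2]
  | C3 b a1 a2 a3 => Comp (comp 3 b) [comp m a1; comp m a2; comp m a3]
  end.

Lemma kcode_ok : forall n v, eval (kcode n) v n.
Proof.
  induction n; intros; simpl. constructor.
  econstructor. econstructor. apply IHn. constructor. constructor.
Qed.

Lemma projs_ok : forall v pre, evals (projs (length pre) (length v)) (pre ++ v) v.
Proof.
  induction v; intros; simpl. constructor.
  constructor.
  - assert (nth (length pre) (pre ++ a :: v) 0 = a) as E.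
    { rewrite app_nth2 by lia. rewrite Nat.sub_diag. reflexivity. }
    rewrite <- E at 2. constructor. rewrite length_app; simpl; lia.
  - specialize (IHv (pre ++ [a])). rewrite length_app in IHv. simpl in IHv.
    rewrite <- app_assoc in IHv. simpl in IHv. replace (S (length pre)) with (length pre + 1) by lia. exact IHv.
Qed.

Lemma comp_ok : forall e m v, wf m e = true -> length v = m -> eval (comp m e) v (den e v).
Proof.
  induction e; intros m v Hw Hl; simpl in *.
  - constructor. apply Nat.ltb_lt in Hw. lia.
  - apply kcode_ok.
  - econstructor. constructor. apply IHe; eauto. constructor. constructor.
  - apply andb_prop in Hw as [Hw H3]. apply andb_prop in Hw as [H1 H2].
    econstructor. constructor. apply IHe1; eauto.
    pose proof (projs_ok v []) as P. simpl in P. rewrite Hl in P. exact P.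
    induction (den e1 v); simpl.
    + constructor. apply IHe2; auto.
    + econstructor. exact IHn.
      econstructor.
      * constructor. constructor. simpl; lia.
        constructor. constructor. simpl; lia.
        pose proof (projs_ok v [n; nat_rect (fun _ => nat) (den e2 v) (fun k r => den e3 (r :: k :: v)) n]) as P.
        simpl in P. rewrite Hl in P. exact P.
      * simpl. apply IHe3; auto. simpl. lia.
  - apply andb_prop in Hw as [H1 H2].
    econstructor. constructor. apply IHe2; eauto. constructor. apply IHe1; auto.
  - apply andb_prop in Hw as [Hw H3]. apply andb_prop in Hw as [H1 H2].
    econstructor. constructor. apply IHe2; eauto. constructor. apply IHe3; eauto. constructor.
    apply IHe1; auto.
  - apply andb_prop in Hw as [Hw H4]. apply andb_prop in Hw as [Hw H3]. apply andb_prop in Hw as [H1 H2].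
    econstructor. constructor. apply IHe2; eauto. constructor. apply IHe3; eauto.
    constructor. apply IHe4; eauto. constructor.
    apply IHe1; auto.
Qed.

Lemma computable_den : forall e, wf 1 e = true -> computable (fun x => den e [x]).
Proof. intros e H. exists (comp 1 e). intros x. apply comp_ok; auto. Qed.

Ltac ds := cbn [den nth].

Definition PRED := Rec (V 0) (K 0) (V 1).
Lemma den_PRED x : den PRED [x] = pred x. Proof. destruct x; reflexivity. Qed.
Definition ADD := Rec (V 0) (V 1) (Su (V 0)).
Lemma den_ADD x y : den ADD [x;y] = x + y. Proof. unfold ADD; ds. induction x; simpl; auto. Qed.
Definition SUB := Rec (V 1) (V 0) (C1 PRED (V 0)).
Lemma den_SUB x y : den SUB [x;y] = x - y.
Proof. unfold SUB; ds. induction y. simpl; lia. cbn [nat_rect]. rewrite den_PRED, IHy. lia. Qed.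
Definition MUL := Rec (V 0) (K 0) (C2 ADD (V 0) (V 3)).
Lemma den_MUL x y : den MUL [x;y] = x * y.
Proof. unfold MUL; ds. induction x. auto. cbn [nat_rect]. rewrite den_ADD, IHx. lia. Qed.
Definition ISZ := Rec (V 0) (K 1) (K 0).
Lemma den_ISZ x : den ISZ [x] = if x =? 0 then 1 else 0. Proof. destruct x; reflexivity. Qed.
Definition IF := Rec (V 0) (V 2) (V 3).
Lemma den_IF c a b : den IF [c;a;b] = match c with 0 => b | S _ => a end. Proof. destruct c; reflexivity. Qed.
Definition EQ := C1 ISZ (C2 ADD (C2 SUB (V 0) (V 1)) (C2 SUB (V 1) (V 0))).
Lemma den_EQ a b : den EQ [a;b] = if a =? b then 1 else 0.
Proof. unfold EQ; ds. rewrite den_SUB, den_SUB, den_ADD, den_ISZ.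
  destruct (a =? b) eqn:E. apply Nat.eqb_eq in E. subst. rewrite Nat.sub_diag. reflexivity.
  apply Nat.eqb_neq in E. destruct (a - b + (b - a) =? 0) eqn:F; auto. apply Nat.eqb_eq in F. lia. Qed.
Definition LT := C1 ISZ (C2 SUB (Su (V 0)) (V 1)).
Lemma den_LT a b : den LT [a;b] = if a <? b then 1 else 0.
Proof. unfold LT; ds. rewrite den_SUB, den_ISZ.
  destruct (a <? b) eqn:E. apply Nat.ltb_lt in E. replace (S a - b) with 0 by lia. reflexivity.
  apply Nat.ltb_ge in E. destruct (S a - b =? 0) eqn:F; auto. apply Nat.eqb_eq in F. lia. Qed.

Fixpoint tri n := match n with 0 => 0 | S k => tri k + S k end.
Definition pr a b := tri (a + b) + b.
Fixpoint uw n := match n with 0 => 0 | S k => if tri (S (uw k)) =? S k then S (uw k) else uw k end.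
Definition psnd n := n - tri (uw n).
Definition pfst n := uw n - psnd n.

Definition TRI := Rec (V 0) (K 0) (C2 ADD (V 0) (Su (V 1))).
Lemma den_TRI n : den TRI [n] = tri n.
Proof. unfold TRI; ds. induction n. auto. cbn [nat_rect]. rewrite den_ADD, IHn. auto. Qed.
Definition PAIR := C2 ADD (C1 TRI (C2 ADD (V 0) (V 1))) (V 1).
Lemma den_PAIR a b : den PAIR [a;b] = pr a b.
Proof. unfold PAIR; ds. rewrite den_ADD, den_TRI, den_ADD. reflexivity. Qed.
Definition UW := Rec (V 0) (K 0) (C3 IF (C2 EQ (C1 TRI (Su (V 0))) (Su (V 1))) (Su (V 0)) (V 0)).
Lemma den_UW n : den UW [n] = uw n.
Proof. unfold UW; ds. induction n. auto. cbn [nat_rect den nth]. rewrite den_IF, den_EQ, den_TRI, IHn. cbn [uw].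
  destruct (tri (S (uw n)) =? S n); reflexivity. Qed.
Definition SND := C2 SUB (V 0) (C1 TRI (C1 UW (V 0))).
Lemma den_SND n : den SND [n] = psnd n.
Proof. unfold SND; ds. rewrite den_UW, den_TRI, den_SUB. reflexivity. Qed.
Definition FST := C2 SUB (C1 UW (V 0)) (C1 SND (V 0)).
Lemma den_FST n : den FST [n] = pfst n.
Proof. unfold FST; ds. rewrite den_UW, den_SND, den_SUB. reflexivity. Qed.

Lemma tri_S n : tri (S n) = tri n + S n. Proof. reflexivity. Qed.
Lemma tri_mono a b : a <= b -> tri a <= tri b.
Proof. induction 1; simpl; lia. Qed.
Lemma uw_spec n : tri (uw n) <= n < tri (S (uw n)).
Proof.
  induction n; simpl. lia.
  destruct (tri (uw n) + S (uw n) =? S n) eqn:E.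
  - apply Nat.eqb_eq in E. simpl. rewrite E. lia.
  - apply Nat.eqb_neq in E. simpl in *. lia.
Qed.
Lemma uw_unique n w : tri w <= n < tri (S w) -> uw n = w.
Proof.
  intros H. pose proof (uw_spec n).
  destruct (Nat.lt_trichotomy (uw n) w) as [L|[L|L]]; auto.
  - assert (tri (S (uw n)) <= tri w) by (apply tri_mono; lia). lia.
  - assert (tri (S w) <= tri (uw n)) by (apply tri_mono; lia). lia.
Qed.
Lemma uw_pr a b : uw (pr a b) = a + b.
Proof. apply uw_unique. unfold pr. simpl. lia. Qed.
Lemma psnd_pr a b : psnd (pr a b) = b.
Proof. unfold psnd. rewrite uw_pr. unfold pr. lia. Qed.
Lemma pfst_pr a b : pfst (pr a b) = a.
Proof. unfold pfst. rewrite psnd_pr, uw_pr. lia. Qed.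
Lemma pr_surj n : pr (pfst n) (psnd n) = n.
Proof.
  pose proof (uw_spec n). unfold pfst, psnd, pr. simpl in H.
  replace (uw n - (n - tri (uw n)) + (n - tri (uw n))) with (uw n) by lia. lia.
Qed.
Lemma pr_inj a b c d : pr a b = pr c d -> a = c /\ b = d.
Proof. intros H. split. rewrite <- (pfst_pr a b), H; apply pfst_pr. rewrite <- (psnd_pr a b), H; apply psnd_pr. Qed.
Lemma pr_ge_r a b : b <= pr a b. Proof. unfold pr; lia. Qed.
Lemma pr_ge_l a b : a <= pr a b.
Proof. unfold pr. assert (a <= tri (a+b)). { clear. induction a; simpl. lia. assert (tri (a+b) <= tri (S a + b)) by (apply tri_mono; lia). simpl in *. lia. } lia. Qed.

Definition hdc n := pfst (pred n).
Definition tlc n := psnd (pred n).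
Definition cns a l := S (pr a l).
Fixpoint nthtl i l := match i with 0 => l | S k => tlc (nthtl k l) end.
Definition nthc i l := hdc (nthtl i l).

Definition HD := C1 FST (C1 PRED (V 0)).
Lemma den_HD n : den HD [n] = hdc n. Proof. unfold HD; ds. rewrite den_PRED, den_FST. reflexivity. Qed.
Definition TL := C1 SND (C1 PRED (V 0)).
Lemma den_TL n : den TL [n] = tlc n. Proof. unfold TL; ds. rewrite den_PRED, den_SND. reflexivity. Qed.
Definition CONS := Su PAIR.
Lemma den_CONS a l : den CONS [a;l] = cns a l. Proof. unfold CONS; ds. rewrite den_PAIR. reflexivity. Qed.
Definition NTHTL := Rec (V 0) (V 1) (C1 TL (V 0)).
Lemma den_NTHTL i l : den NTHTL [i;l] = nthtl i l.
Proof. unfold NTHTL; ds. induction i. auto. cbn [nat_rect]. rewrite den_TL, IHi. reflexivity. Qed.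
Definition NTH := C1 HD NTHTL.
Lemma den_NTH i l : den NTH [i;l] = nthc i l.
Proof. unfold NTH; ds. rewrite den_NTHTL, den_HD. reflexivity. Qed.

Lemma hdc_cns a l : hdc (cns a l) = a. Proof. unfold hdc, cns. simpl. apply pfst_pr. Qed.
Lemma tl_cons a l : tlc (cns a l) = l. Proof. unfold tlc, cns. simpl. apply psnd_pr. Qed.
Lemma cons_hd_tl n : n <> 0 -> cns (hdc n) (tlc n) = n.
Proof. intros. unfold cns, hdc, tlc. rewrite pr_surj. lia. Qed.

Fixpoint encv (l : list nat) : nat := match l with [] => 0 | a :: l' => cns a (encv l') end.

Lemma nthtl_encv : forall l i, i < length l -> nthtl i (encv l) = encv (skipn i l).
Proof.
  intros l i. revert l. induction i; intros l H; simpl; auto.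
  destruct l as [|a l]; simpl in H. lia.
  rewrite IHi by (simpl; lia). destruct l as [|b l']; simpl in H. lia.
  simpl.
  clear IHi. revert a b l' H. induction i; intros; simpl. apply tl_cons.
  destruct l' as [|c l'']. simpl in H; lia. apply IHi. simpl in *; lia.
Qed.

Fixpoint shc (c : nat) (e : ex) : ex :=
  match e with
  | V i => if i <? c then V i else V (S i)
  | K n => K n
  | Su a => Su (shc c a)
  | Rec n z s => Rec (shc c n) (shc c z) (shc (S (S c)) s)
  | C1 b a => C1 b (shc c a)
  | C2 b a1 a2 => C2 b (shc c a1) (shc c a2)
  | C3 b a1 a2 a3 => C3 b (shc c a1) (shc c a2) (shc c a3)
  end.

Lemma den_shc : forall e pre x v, den (shc (length pre) e) (pre ++ x :: v) = den e (pre ++ v).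
Proof.
  induction e; intros pre x v; simpl; try (rewrite ?IHe, ?IHe1, ?IHe2, ?IHe3, ?IHe4; reflexivity).
  - destruct (n <? length pre) eqn:E; simpl.
    + apply Nat.ltb_lt in E. rewrite !app_nth1 by lia. reflexivity.
    + apply Nat.ltb_ge in E. rewrite !app_nth2 by lia. replace (S n - length pre) with (S (n - length pre)) by lia. reflexivity.
  - rewrite IHe1, IHe2. generalize (den e1 (pre ++ v)) as N. induction N; simpl; auto.
    rewrite IHN. apply (IHe3 (_ :: _ :: pre)).
Qed.

Lemma den_sh0 e x v : den (shc 0 e) (x :: v) = den e v.
Proof. apply (den_shc e [] x v). Qed.

Lemma wf_shc : forall e c m, wf m e = true -> wf (S m) (shc c e) = true.
Proof.
  induction e; intros c m H; simpl in *.
  - destruct (n <? c); simpl; apply Nat.ltb_lt in H; apply Nat.ltb_lt; lia.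
  - auto.
  - auto.
  - rewrite !Bool.andb_true_iff in H |- *. intuition auto.
  - rewrite !Bool.andb_true_iff in H |- *. intuition auto.
  - rewrite !Bool.andb_true_iff in H |- *. intuition auto.
  - rewrite !Bool.andb_true_iff in H |- *. intuition auto.
Qed.

Definition BEX (n P : ex) := Rec n (K 0) (C3 IF (V 0) (K 1) (shc 0 P)).
Lemma T_bex n P v : den (BEX n P) v <> 0 <-> exists j, j < den n v /\ den P (j :: v) <> 0.
Proof.
  unfold BEX. cbn [den]. generalize (den n v) as N. induction N; cbn [nat_rect].
  - split. lia. intros [j [H _]]; lia.
  - cbn [den nth]. rewrite den_IF. rewrite den_sh0.
    destruct (nat_rect _ _ _ N) eqn:E.
    + assert (~ exists j, j < N /\ den P (j::v) <> 0) by (rewrite <- IHN; lia).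
      split. intros H1. exists N. split; auto.
      intros [j [H1 H2]]. destruct (Nat.eq_dec j N). subst; auto. exfalso; apply H; exists j; split; auto; lia.
    + split; intros _; auto. destruct IHN as [I _]. destruct I as [j [H1 H2]]. lia. exists j; split; auto.
Qed.
Definition NOT (a : ex) := C1 ISZ a.
Lemma T_not a v : den (NOT a) v <> 0 <-> den a v = 0.
Proof. unfold NOT; cbn [den nth]. rewrite den_ISZ. destruct (den a v); simpl; split; auto; lia. Qed.
Definition BALL (n P : ex) := NOT (BEX n (NOT P)).
Lemma T_ball n P v : den (BALL n P) v <> 0 <-> forall j, j < den n v -> den P (j :: v) <> 0.
Proof.
  unfold BALL. rewrite T_not. split.
  - intros H j Hj Hp. assert (den (BEX n (NOT P)) v <> 0). apply T_bex. exists j. split; auto. apply T_not; auto. lia.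
  - intros H. destruct (den (BEX n (NOT P)) v) eqn:E; auto. exfalso.
    assert (den (BEX n (NOT P)) v <> 0) by lia. apply T_bex in H0. destruct H0 as [j [H1 H2]].
    apply T_not in H2. apply (H j); auto.
Qed.
Definition AND (a b : ex) := C2 MUL a b.
Lemma T_and a b v : den (AND a b) v <> 0 <-> den a v <> 0 /\ den b v <> 0.
Proof. unfold AND; cbn [den nth]. rewrite den_MUL. rewrite Nat.mul_eq_0. tauto. Qed.
Definition OR (a b : ex) := C2 ADD a b.
Lemma T_or a b v : den (OR a b) v <> 0 <-> den a v <> 0 \/ den b v <> 0.
Proof. unfold OR; cbn [den nth]. rewrite den_ADD. lia. Qed.
Definition EQe (a b : ex) := C2 EQ a b.
Lemma T_eq a b v : den (EQe a b) v <> 0 <-> den a v = den b v.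
Proof. unfold EQe; cbn [den nth]. rewrite den_EQ. destruct (den a v =? den b v) eqn:E.
  apply Nat.eqb_eq in E. split; auto. apply Nat.eqb_neq in E. split; intros; lia. Qed.
Lemma T_v i v : den (V i) v <> 0 <-> nth i v 0 <> 0. Proof. reflexivity. Qed.

Definition mkj k c v y := pr k (pr c (pr v y)).
Definition jk J := pfst J.
Definition jc J := pfst (psnd J).
Definition jv J := pfst (psnd (psnd J)).
Definition jy J := psnd (psnd (psnd J)).

Definition JustL (L : nat -> nat) (i : nat) : Prop :=
 let J := L i in
 let cn := jc J in let vn := jv J in let y := jy J in let tag := pfst cn in let arg := psnd cn in
 (jk J = 0 /\ (
   (tag = 0 /\ y = 0) \/
   (tag = 1 /\ (vn <> 0 /\ y = S (hdc vn))) \/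
   (tag = 2 /\ (nthtl arg vn <> 0 /\ y = hdc (nthtl arg vn))) \/
   (tag = 3 /\ exists j, j < i /\ exists l, l < i /\ (L j = mkj 1 (psnd arg) vn (jy (L j)) /\ L l = mkj 0 (pfst arg) (jy (L j)) y)) \/
   (tag = 4 /\ (vn <> 0 /\ (hdc vn = 0 /\ exists j, j < i /\ L j = mkj 0 (pfst arg) (tlc vn) y))) \/
   (tag = 4 /\ (vn <> 0 /\ (hdc vn <> 0 /\ exists j, j < i /\ exists l, l < i /\ (L j = mkj 0 cn (cns (pred (hdc vn)) (tlc vn)) (jy (L j)) /\ L l = mkj 0 (psnd arg) (cns (pred (hdc vn)) (cns (jy (L j)) (tlc vn))) y)))) \/
   (tag = 5 /\ ((exists j, j < i /\ L j = mkj 0 arg (cns y vn) 0) /\ forall m, m < y -> exists j, j < i /\ (L j = mkj 0 arg (cns m vn) (jy (L j)) /\ jy (L j) <> 0)))))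
 \/ (jk J = 1 /\ ((cn = 0 /\ y = 0) \/ (cn <> 0 /\ (y <> 0 /\ exists j, j < i /\ exists l, l < i /\ (L j = mkj 0 (hdc cn) vn (hdc y) /\ L l = mkj 1 (tlc cn) vn (tlc y)))))).

Definition Just (T i : nat) : Prop := JustL (fun j => nthc j T) i.

Definition eJ d := C2 NTH (V d) (V (S d)).
Definition eLk d x := C2 NTH x (V (S d)).
Definition eFK J := C1 FST J.
Definition eFC J := C1 FST (C1 SND J).
Definition eFV J := C1 FST (C1 SND (C1 SND J)).
Definition eFY J := C1 SND (C1 SND (C1 SND J)).
Definition eMk k c v y := C2 PAIR k (C2 PAIR c (C2 PAIR v y)).
Definition eCN d := eFC (eJ d).
Definition eTAG d := C1 FST (eCN d).
Definition eARG d := C1 SND (eCN d).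
Definition eVN d := eFV (eJ d).
Definition eY d := eFY (eJ d).

Definition R0 :=
 OR (AND (EQe (eTAG 0) (K 0)) (EQe (eY 0) (K 0)))
 (OR (AND (EQe (eTAG 0) (K 1)) (AND (eVN 0) (EQe (eY 0) (Su (C1 HD (eVN 0))))))
 (OR (AND (EQe (eTAG 0) (K 2)) (AND (C2 NTHTL (eARG 0) (eVN 0)) (EQe (eY 0) (C1 HD (C2 NTHTL (eARG 0) (eVN 0))))))
 (OR (AND (EQe (eTAG 0) (K 3)) (BEX (V 0) (BEX (V 1)
        (AND (EQe (eLk 2 (V 1)) (eMk (K 1) (C1 SND (eARG 2)) (eVN 2) (eFY (eLk 2 (V 1)))))
             (EQe (eLk 2 (V 0)) (eMk (K 0) (C1 FST (eARG 2)) (eFY (eLk 2 (V 1))) (eY 2)))))))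
 (OR (AND (EQe (eTAG 0) (K 4)) (AND (eVN 0) (AND (NOT (C1 HD (eVN 0)))
        (BEX (V 0) (EQe (eLk 1 (V 0)) (eMk (K 0) (C1 FST (eARG 1)) (C1 TL (eVN 1)) (eY 1)))))))
 (OR (AND (EQe (eTAG 0) (K 4)) (AND (eVN 0) (AND (C1 HD (eVN 0)) (BEX (V 0) (BEX (V 1)
        (AND (EQe (eLk 2 (V 1)) (eMk (K 0) (eCN 2) (C2 CONS (C1 PRED (C1 HD (eVN 2))) (C1 TL (eVN 2))) (eFY (eLk 2 (V 1)))))
             (EQe (eLk 2 (V 0)) (eMk (K 0) (C1 SND (eARG 2)) (C2 CONS (C1 PRED (C1 HD (eVN 2))) (C2 CONS (eFY (eLk 2 (V 1))) (C1 TL (eVN 2)))) (eY 2)))))))))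
     (AND (EQe (eTAG 0) (K 5)) (AND (BEX (V 0) (EQe (eLk 1 (V 0)) (eMk (K 0) (eARG 1) (C2 CONS (eY 1) (eVN 1)) (K 0))))
            (BALL (eY 0) (BEX (V 1) (AND (EQe (eLk 2 (V 0)) (eMk (K 0) (eARG 2) (C2 CONS (V 1) (eVN 2)) (eFY (eLk 2 (V 0))))) (eFY (eLk 2 (V 0))))))))))))).

Definition R1 :=
 OR (AND (EQe (eCN 0) (K 0)) (EQe (eY 0) (K 0)))
    (AND (eCN 0) (AND (eY 0) (BEX (V 0) (BEX (V 1)
       (AND (EQe (eLk 2 (V 1)) (eMk (K 0) (C1 HD (eCN 2)) (eVN 2) (C1 HD (eY 2))))
            (EQe (eLk 2 (V 0)) (eMk (K 1) (C1 TL (eCN 2)) (eVN 2) (C1 TL (eY 2))))))))).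

Definition CHK := OR (AND (EQe (eFK (eJ 0)) (K 0)) R0) (AND (EQe (eFK (eJ 0)) (K 1)) R1).

Lemma wf_CHK : wf 2 CHK = true. Proof. vm_compute. reflexivity. Qed.



Lemma iff_and A B A' B' : (A <-> A') -> (B <-> B') -> (A /\ B <-> A' /\ B'). Proof. tauto. Qed.
Lemma iff_or A B A' B' : (A <-> A') -> (B <-> B') -> (A \/ B <-> A' \/ B'). Proof. tauto. Qed.
Lemma iff_ex (P Q : nat -> Prop) : (forall x, P x <-> Q x) -> ((exists x, P x) <-> exists x, Q x).
Proof. intros H. split; intros [x Hx]; exists x; apply H; auto. Qed.
Lemma iff_all (P Q : nat -> Prop) : (forall x, P x <-> Q x) -> ((forall x, P x) <-> forall x, Q x).
Proof. intros H. split; intros H1 x; apply H; auto. Qed.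
Lemma iff_imp A B A' B' : (A <-> A') -> (B <-> B') -> ((A -> B) <-> (A' -> B')). Proof. tauto. Qed.

Lemma den_C1 b a v : den (C1 b a) v = den b [den a v]. Proof. reflexivity. Qed.
Lemma den_C2 b a1 a2 v : den (C2 b a1 a2) v = den b [den a1 v; den a2 v]. Proof. reflexivity. Qed.
Lemma den_C3 b a1 a2 a3 v : den (C3 b a1 a2 a3) v = den b [den a1 v; den a2 v; den a3 v]. Proof. reflexivity. Qed.
Lemma den_V i v : den (V i) v = nth i v 0. Proof. reflexivity. Qed.
Lemma den_K n v : den (K n) v = n. Proof. reflexivity. Qed.
Lemma den_Su a v : den (Su a) v = S (den a v). Proof. reflexivity. Qed.
Ltac dstr := repeat (rewrite den_C1 || rewrite den_C2 || rewrite den_C3 || rewrite den_V || rewrite den_K || rewrite den_Su); cbn [nth].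
Ltac leaf := unfold eTAG, eARG, eVN, eY, eCN, eFC, eFV, eFY, eFK, eMk, eJ, eLk; dstr;
  rewrite ?den_NTH, ?den_FST, ?den_SND, ?den_HD, ?den_TL, ?den_PAIR, ?den_CONS, ?den_PRED, ?den_NTHTL;
  match goal with |- ?a <-> ?b => constr_eq a b; apply iff_refl end.

Ltac step := match goal with
 | |- den (OR _ _) _ <> 0 <-> _ \/ _ => rewrite T_or; apply iff_or
 | |- den (AND _ _) _ <> 0 <-> _ /\ _ => rewrite T_and; apply iff_and
 | |- den (BEX _ _) _ <> 0 <-> exists _, _ => rewrite T_bex; apply iff_ex; intro; apply iff_and
 | |- den (BALL _ _) _ <> 0 <-> forall _, _ => rewrite T_ball; apply iff_all; intro; apply iff_imp
 | |- den (EQe _ _) _ <> 0 <-> _ => rewrite T_eq; leaf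
 | |- den (NOT _) _ <> 0 <-> _ => rewrite T_not; leaf
 | |- _ => leaf
 end.

Lemma CHK_iff T i : den CHK [i; T] <> 0 <-> Just T i.
Proof.
  unfold CHK, R0, R1, Just, JustL, mkj, jk, jc, jv, jy. cbv zeta.
  repeat step.

Qed.

Definition valid T := forall i, i < T -> nthtl i T <> 0 -> Just T i.
Definition VALIDe := BALL (V 0) (OR (NOT (C2 NTHTL (V 0) (V 1))) (C2 CHK (V 0) (V 1))).
Lemma VALID_iff T : den VALIDe [T] <> 0 <-> valid T.
Proof.
  unfold VALIDe, valid. rewrite T_ball. rewrite den_V. cbn [nth].
  split; intros H i Hi.
  - specialize (H i Hi). rewrite T_or, T_not in H. revert H. dstr. rewrite den_NTHTL. intro H.
    intros Hn. rewrite CHK_iff in H. destruct H as [H|H]; [contradiction|exact H].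
  - rewrite T_or, T_not. dstr. rewrite den_NTHTL.
    destruct (nthtl i T) eqn:E. left; auto. right. apply CHK_iff. apply H; lia.
Qed.

Definition Xe e := pr 1 (pr e 0).
Definition valet e t := pfst (pfst t) <> 0 /\ valid (psnd t) /\
  exists i, i < psnd t /\ (nthtl i (psnd t) <> 0 /\ nthc i (psnd t) = mkj 0 e (cns (pfst t) 0) (Xe e)).
Definition VALET := AND (C1 FST (C1 FST (V 1))) (AND (C1 VALIDe (C1 SND (V 1)))
  (BEX (C1 SND (V 1)) (AND (C2 NTHTL (V 0) (C1 SND (V 2)))
     (EQe (C2 NTH (V 0) (C1 SND (V 2))) (eMk (K 0) (V 1) (C2 CONS (C1 FST (V 2)) (K 0)) (C2 PAIR (K 1) (C2 PAIR (V 1) (K 0)))))))).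
Lemma VALET_iff e t : den VALET [e;t] <> 0 <-> valet e t.
Proof.
  unfold VALET, valet. rewrite T_and, T_and, T_bex. unfold eMk. dstr.
  rewrite den_FST, den_FST, den_SND. rewrite VALID_iff.
  apply iff_and. reflexivity. apply iff_and. reflexivity.
  apply iff_ex. intro i. apply iff_and. reflexivity.
  rewrite T_and, T_eq. dstr. rewrite ?den_NTHTL, ?den_NTH, ?den_FST, ?den_SND, ?den_CONS, ?den_PAIR.
  unfold mkj, Xe. reflexivity.
Qed.

Definition VG e t := valet e t /\ forall t', t' < t -> ~ valet e t'.
Definition VGe := AND (C2 VALET (V 0) (V 1)) (BALL (V 1) (NOT (C2 VALET (V 1) (V 0)))).
Definition vg e t := den VGe [e;t].
Lemma VG_iff e t : vg e t <> 0 <-> VG e t.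
Proof.
  unfold vg, VGe, VG. rewrite T_and, T_ball. dstr. rewrite VALET_iff.
  apply iff_and. reflexivity. apply iff_all. intro t'. apply iff_imp. reflexivity.
  rewrite T_not. dstr. rewrite <- VALET_iff. lia.
Qed.

Definition ifz (c a b : nat) := match c with 0 => b | S _ => a end.
Definition Snat (vg : nat -> nat -> nat) (x : nat) : nat :=
 ifz (pfst x)
   (ifz (pred (pfst x)) x
      (ifz (psnd (psnd x))
        (ifz (vg (pfst (psnd x)) (pfst (pred (psnd (psnd x)))))
           (ifz (psnd (pred (psnd (psnd x))))
               (pr 1 (pr (pfst (psnd x)) (S (pr (pfst (pred (psnd (psnd x)))) (pred (psnd (pred (psnd (psnd x)))))))))
               (pr 1 (pr (pfst (psnd x)) 0)))
           x)
        x))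
   (ifz (psnd (psnd x)) (pr 0 (pr (pfst (psnd x)) (pred (psnd (psnd x))))) x).

Definition eSn (vc : ex -> ex -> ex) : ex :=
 C3 IF (C1 FST (V 0))
   (C3 IF (C1 PRED (C1 FST (V 0))) (V 0)
     (C3 IF (C1 SND (C1 SND (V 0)))
        (C3 IF (vc (C1 FST (C1 SND (V 0))) (C1 FST (C1 PRED (C1 SND (C1 SND (V 0))))))
           (C3 IF (C1 SND (C1 PRED (C1 SND (C1 SND (V 0)))))
              (C2 PAIR (K 1) (C2 PAIR (C1 FST (C1 SND (V 0))) (Su (C2 PAIR (C1 FST (C1 PRED (C1 SND (C1 SND (V 0))))) (C1 PRED (C1 SND (C1 PRED (C1 SND (C1 SND (V 0)))))))))) 
              (C2 PAIR (K 1) (C2 PAIR (C1 FST (C1 SND (V 0))) (K 0))))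
           (V 0))
        (V 0)))
   (C3 IF (C1 SND (C1 SND (V 0))) (C2 PAIR (K 0) (C2 PAIR (C1 FST (C1 SND (V 0))) (C1 PRED (C1 SND (C1 SND (V 0)))))) (V 0)).

Lemma den_eSn vc vgf x : (forall a b v, den (vc a b) v = vgf (den a v) (den b v)) ->
  den (eSn vc) [x] = Snat vgf x.
Proof.
  intros H. unfold eSn. dstr. rewrite H. dstr.
  rewrite ?den_IF, ?den_FST, ?den_SND, ?den_PRED, ?den_PAIR. reflexivity.
Qed.

Definition fS := Snat (fun _ _ => 0).
Definition gS := Snat vg.

Lemma fS_computable : computable fS.
Proof.
  destruct (computable_den (eSn (fun _ _ => K 0))) as [c Hc]. vm_compute. reflexivity.
  exists c. intros x. specialize (Hc x). rewrite (den_eSn _ (fun _ _ => 0)) in Hc; auto.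
Qed.
Lemma gS_computable : computable gS.
Proof.
  destruct (computable_den (eSn (fun a b => C2 VGe a b))) as [c Hc]. vm_compute. reflexivity.
  exists c. intros x. specialize (Hc x). rewrite (den_eSn _ vg) in Hc; auto.
Qed.

Fixpoint enc (c : code) : nat :=
  match c with
  | Zero => pr 0 0 | Succ => pr 1 0 | Proj i => pr 2 i
  | Comp h gs => pr 3 (pr (enc h) (encv (map enc gs)))
  | Prec b s => pr 4 (pr (enc b) (enc s))
  | Mu c => pr 5 (enc c)
  end.

Lemma pfst0 : pfst 0 = 0. Proof. reflexivity. Qed.
Lemma psnd0 : psnd 0 = 0. Proof. reflexivity. Qed.
Lemma hdc0 : hdc 0 = 0. Proof. reflexivity. Qed.
Lemma tlc0 : tlc 0 = 0. Proof. reflexivity. Qed.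
Lemma nthtl_S i l : nthtl (S i) l = nthtl i (tlc l).
Proof. revert l; induction i; intros; simpl in *; auto. Qed.
Lemma nthtl_0 i : nthtl i 0 = 0. Proof. induction i; simpl; auto. rewrite IHi. reflexivity. Qed.
Lemma nthc_encv T j : nthc j (encv T) = nth j T 0.
Proof.
  unfold nthc. revert j; induction T; intros j; simpl.
  - rewrite nthtl_0. destruct j; reflexivity.
  - destruct j. simpl. apply hdc_cns. rewrite nthtl_S, tl_cons. apply IHT.
Qed.
Lemma nthtl_encv_nz T i : nthtl i (encv T) <> 0 <-> i < length T.
Proof.
  revert i; induction T; intros i; simpl.
  - rewrite nthtl_0. lia.
  - destruct i. simpl. unfold cns. lia. rewrite nthtl_S, tl_cons, IHT. lia.
Qed.
Lemma length_le_encv T : length T <= encv T.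
Proof. induction T; simpl; auto. unfold cns. pose proof (pr_ge_r a (encv T)). lia. Qed.
Lemma tlc_lt n : n <> 0 -> tlc n < n.
Proof. intros H. unfold tlc. pose proof (pr_surj (pred n)). pose proof (pr_ge_r (pfst (pred n)) (psnd (pred n))). lia. Qed.
Lemma nthtl_le i n : nthtl i n <> 0 -> i < n.
Proof.
  revert n; induction i; intros n H. simpl in *. lia.
  rewrite nthtl_S in H. pose proof (IHi _ H).
  destruct n. rewrite tlc0 in *. lia. pose proof (tlc_lt (S n)). lia.
Qed.

Lemma encv_nil v : encv v = 0 -> v = [].
Proof. destruct v; simpl; auto. unfold cns; lia. Qed.
Lemma encv_cons v n : encv v = n -> n <> 0 -> exists w, v = hdc n :: w /\ encv w = tlc n.
Proof.
  intros H Hn. destruct v as [|a w]; simpl in H. lia. subst. exists w.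
  rewrite hdc_cns, tl_cons. auto.
Qed.

Lemma jk_mkj k c v y : jk (mkj k c v y) = k. Proof. unfold jk, mkj. apply pfst_pr. Qed.
Lemma jc_mkj k c v y : jc (mkj k c v y) = c. Proof. unfold jc, mkj. rewrite psnd_pr. apply pfst_pr. Qed.
Lemma jv_mkj k c v y : jv (mkj k c v y) = v. Proof. unfold jv, mkj. rewrite !psnd_pr. apply pfst_pr. Qed.
Lemma jy_mkj k c v y : jy (mkj k c v y) = y. Proof. unfold jy, mkj. rewrite !psnd_pr. reflexivity. Qed.

Lemma JustL_shift L L' i o : JustL L i -> (forall j, j <= i -> L' (j + o) = L j) -> JustL L' (i + o).
Proof.
  intros H HL. assert (HJ : L' (i + o) = L i) by (apply HL; lia).
  unfold JustL in *. cbv zeta in *. rewrite HJ.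
  assert (E : forall j, j < i -> L' (j + o) = L j) by (intros; apply HL; lia).
  destruct H as [[Hk H]|[Hk H]]; [left|right]; split; auto.
  - destruct H as [H|[H|[H|[H|[H|[H|H]]]]]].
    + left; auto.
    + right; left; auto.
    + right; right; left; auto.
    + right; right; right; left. destruct H as [Ht [j0 [Hj0 [l0 [Hl0 [H1 H2]]]]]]. split; auto.
      exists (j0 + o). split. lia. exists (l0 + o). split. lia. rewrite !E by auto. auto.
    + right; right; right; right; left. destruct H as [Ht [H1 [H2 [j0 [Hj0 H3]]]]]. repeat split; auto.
      exists (j0 + o). split. lia. rewrite E by auto. auto.
    + right; right; right; right; right; left. destruct H as [Ht [H1 [H2 [j0 [Hj0 [l0 [Hl0 [H3 H4]]]]]]]]. repeat split; auto.
      exists (j0 + o). split. lia. exists (l0 + o). split. lia. rewrite !E by auto. auto.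
    + right; right; right; right; right; right. destruct H as [Ht [[j0 [Hj0 H1]] H2]]. repeat split; auto.
      exists (j0 + o). split. lia. rewrite E by auto. auto.
      intros m Hm. destruct (H2 m Hm) as [j1 [Hj1 H3]]. exists (j1 + o). split. lia. rewrite E by auto. auto.
  - destruct H as [H|H]. left; auto. right. destruct H as [H1 [H2 [j0 [Hj0 [l0 [Hl0 [H3 H4]]]]]]]. repeat split; auto.
    exists (j0 + o). split. lia. exists (l0 + o). split. lia. rewrite !E by auto. auto.
Qed.

Definition vlist T := forall i, i < length T -> JustL (fun j => nth j T 0) i.

Lemma valid_vlist T : valid (encv T) <-> vlist T.
Proof.
  unfold valid, vlist, Just.
  assert (E : (fun j => nthc j (encv T)) = (fun j => nth j T 0)).
  { apply functional_extensionality. intros. apply nthc_encv. }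
  rewrite E. split; intros H i Hi.
  - apply H. pose proof (length_le_encv T). lia. apply nthtl_encv_nz. auto.
  - intros Hn. apply H. apply nthtl_encv_nz. auto.
Qed.

Lemma vlist_app T1 T2 : vlist T1 -> vlist T2 -> vlist (T1 ++ T2).
Proof.
  intros H1 H2 i Hi. rewrite length_app in Hi.
  destruct (Nat.lt_ge_cases i (length T1)).
  - replace i with (i + 0) by lia. apply JustL_shift with (L := fun j => nth j T1 0).
    apply H1; auto. intros j Hj. rewrite app_nth1 by lia. f_equal. lia.
  - replace i with ((i - length T1) + length T1) by lia. apply JustL_shift with (L := fun j => nth j T2 0).
    apply H2; lia. intros j Hj. rewrite app_nth2 by lia. f_equal. lia.
Qed.

Lemma vlist_snoc T J : vlist T -> JustL (fun j => nth j (T ++ [J]) 0) (length T) -> vlist (T ++ [J]).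
Proof.
  intros H HJ i Hi. rewrite length_app in Hi. simpl in Hi.
  destruct (Nat.lt_ge_cases i (length T)).
  - replace i with (i + 0) by lia. apply JustL_shift with (L := fun j => nth j T 0).
    apply H; auto. intros j Hj. rewrite app_nth1 by lia. f_equal. lia.
  - replace i with (length T) by lia. auto.
Qed.

Lemma vlist_nil : vlist []. Proof. intros i Hi. simpl in Hi. lia. Qed.

Lemma In_idx (x : nat) T : In x T -> exists j, j < length T /\ nth j T 0 = x.
Proof.
  induction T; simpl. tauto. intros [H|H]. exists 0. split. lia. auto.
  destruct (IHT H) as [j [Hj Hx]]. exists (S j). split. lia. auto.
Qed.

Definition Holds J :=
  (jk J = 0 -> forall c v, enc c = jc J -> encv v = jv J -> eval c v (jy J)) /\
  (jk J = 1 -> forall gs v, encv (map enc gs) = jc J -> encv v = jv J ->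
     exists ys, encv ys = jy J /\ evals gs v ys).

Lemma enc_pos c : enc c = 0 -> c = Zero.
Proof.
  destruct c; simpl; intros H; auto;
  match type of H with pr ?a ?b = 0 => pose proof (pr_ge_l a b) end; lia.
Qed.

Lemma Holds0 : Holds 0.
Proof.
  split.
  - intros _ c v Hc Hv. change (jc 0) with 0 in Hc. change (jv 0) with 0 in Hv. change (jy 0) with 0.
    apply enc_pos in Hc. apply encv_nil in Hv. subst. constructor.
  - intros H. change (jk 0) with 0 in H. discriminate.
Qed.

Lemma Holds_0 c0 vn y : Holds (mkj 0 c0 vn y) -> forall c v, enc c = c0 -> encv v = vn -> eval c v y.
Proof. intros [H _] c v H1 H2. rewrite <- (jy_mkj 0 c0 vn y). apply H. apply jk_mkj. rewrite jc_mkj; auto. rewrite jv_mkj; auto. Qed.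
Lemma Holds_1 c0 vn y : Holds (mkj 1 c0 vn y) -> forall gs v, encv (map enc gs) = c0 -> encv v = vn -> exists ys, encv ys = y /\ evals gs v ys.
Proof. intros [_ H] gs v H1 H2. rewrite <- (jy_mkj 1 c0 vn y). apply H. apply jk_mkj. rewrite jc_mkj; auto. rewrite jv_mkj; auto. Qed.

Ltac tagcase Henc := rewrite <- Henc in *; simpl enc in *; repeat (rewrite pfst_pr in * || rewrite psnd_pr in *).

Lemma sound T : valid T -> forall i, Holds (nthc i T).
Proof.
  intros HV i. induction i as [i IH] using Wf_nat.lt_wf_ind.
  destruct (nthtl i T) eqn:Hn.
  { unfold nthc. rewrite Hn. apply Holds0. }
  assert (HJ : Just T i) by (apply HV; [apply nthtl_le; lia | lia]).
  unfold Just, JustL in HJ. cbv zeta in HJ.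
  destruct HJ as [[Hk H]|[Hk H]]; split; intros Hk'; try (rewrite Hk in Hk'; discriminate).
  - intros c v Henc Hv.
    destruct H as [H|[H|[H|[H|[H|[H|H]]]]]].
    + destruct H as [Ht Hy]. destruct c; tagcase Henc; try discriminate.
      rewrite Hy. constructor.
    + destruct H as [Ht [Hvn Hy]]. destruct c; tagcase Henc; try discriminate.
      destruct (encv_cons v _ Hv Hvn) as [w [E1 E2]]. rewrite E1, Hy. constructor.
    + destruct H as [Ht [Hvn Hy]]. destruct c; tagcase Henc; try discriminate.
      rewrite <- Hv in Hvn, Hy. rewrite Hy. change (hdc (nthtl n0 (encv v))) with (nthc n0 (encv v)).
      rewrite nthc_encv. constructor. apply nthtl_encv_nz. auto.
    + destruct H as [Ht [j [Hj [l [Hl [H1 H2]]]]]]. destruct c; tagcase Henc; try discriminate.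
      remember (jy (nthc j T)) as r.
      pose proof (IH j Hj) as Q1. rewrite H1 in Q1.
      destruct (Holds_1 _ _ _ Q1 l0 v eq_refl Hv) as [ys [Hys Hev]].
      pose proof (IH l Hl) as Q2. rewrite H2 in Q2.
      econstructor. exact Hev. apply (Holds_0 _ _ _ Q2); auto.
    + destruct H as [Ht [Hvn [Hh [j [Hj H1]]]]]. destruct c; tagcase Henc; try discriminate.
      destruct (encv_cons v _ Hv Hvn) as [w [E1 E2]]. rewrite E1, Hh.
      pose proof (IH j Hj) as Q1. rewrite H1 in Q1. constructor. apply (Holds_0 _ _ _ Q1); auto.
    + destruct H as [Ht [Hvn [Hh [j [Hj [l [Hl [H1 H2]]]]]]]]. destruct c; tagcase Henc; try discriminate.
      destruct (encv_cons v _ Hv Hvn) as [w [E1 E2]]. rewrite E1.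
      remember (jy (nthc j T)) as r.
      destruct (hdc (jv (nthc i T))) as [|n1] eqn:Ehd. contradiction.
      simpl in H1, H2.
      pose proof (IH j Hj) as Q1. rewrite H1 in Q1.
      pose proof (IH l Hl) as Q2. rewrite H2 in Q2.
      econstructor.
      * apply (Holds_0 _ _ _ Q1). simpl. reflexivity. simpl. rewrite E2. reflexivity.
      * apply (Holds_0 _ _ _ Q2). reflexivity. simpl. rewrite E2. reflexivity.
    + destruct H as [Ht [[j [Hj H1]] H2]]. destruct c; tagcase Henc; try discriminate.
      pose proof (IH j Hj) as Q1. rewrite H1 in Q1.
      constructor. apply (Holds_0 _ _ _ Q1). reflexivity. simpl. rewrite Hv. reflexivity.
      intros m Hm. destruct (H2 m Hm) as [j' [Hj' [H3 H4]]].
      remember (jy (nthc j' T)) as r. destruct r as [|k]. contradiction. exists k.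
      pose proof (IH j' Hj') as Q2. rewrite H3 in Q2.
      apply (Holds_0 _ _ _ Q2). reflexivity. simpl. rewrite Hv. reflexivity.
  - intros gs v Henc Hv.
    destruct H as [[Hc Hy]|[Hc [Hy [j [Hj [l [Hl [H1 H2]]]]]]]].
    + rewrite Hc in Henc. destruct gs; simpl in Henc. exists []. split. rewrite Hy; reflexivity. constructor.
      unfold cns in Henc. lia.
    + destruct gs as [|g gs]; simpl in Henc. rewrite <- Henc in Hc. contradiction.
      pose proof (IH j Hj) as Q1. rewrite H1 in Q1.
      pose proof (IH l Hl) as Q2. rewrite H2 in Q2.
      rewrite <- Henc in Q1, Q2. rewrite hdc_cns in Q1. rewrite tl_cons in Q2.
      destruct (Holds_1 _ _ _ Q2 gs v eq_refl Hv) as [ys [Hys Hev]].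
      exists (hdc (jy (nthc i T)) :: ys). split.
      simpl. rewrite Hys. apply cons_hd_tl. auto.
      constructor. apply (Holds_0 _ _ _ Q1); auto. auto.
Qed.

Section Ind.
Variable P : code -> list nat -> nat -> Prop.
Variable Q : list code -> list nat -> list nat -> Prop.
Hypothesis Hzero : forall v, P Zero v 0.
Hypothesis Hsucc : forall x v, P Succ (x::v) (S x).
Hypothesis Hproj : forall i v, i < length v -> P (Proj i) v (nth i v 0).
Hypothesis Hcomp : forall h gs v ys y, Q gs v ys -> P h ys y -> P (Comp h gs) v y.
Hypothesis Hprec0 : forall b s v y, P b v y -> P (Prec b s) (0::v) y.
Hypothesis HprecS : forall b s n v r y, P (Prec b s) (n::v) r -> P s (n::r::v) y -> P (Prec b s) (S n :: v) y.
Hypothesis Hmu : forall c v n, P c (n::v) 0 -> (forall m, m < n -> exists k, P c (m::v) (S k)) -> P (Mu c) v n.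
Hypothesis Hnil : forall v, Q [] v [].
Hypothesis Hcons : forall g gs v y ys, P g v y -> Q gs v ys -> Q (g::gs) v (y::ys).

Fixpoint evind c v y (H : eval c v y) {struct H} : P c v y :=
  match H in eval c v y return P c v y with
  | eval_zero v => Hzero v
  | eval_succ x v => Hsucc x v
  | eval_proj i v h => Hproj i v h
  | eval_comp h gs v ys y H1 H2 => Hcomp h gs v ys y (evsind gs v ys H1) (evind h ys y H2)
  | eval_prec0 b s v y H1 => Hprec0 b s v y (evind b v y H1)
  | eval_precS b s n v r y H1 H2 => HprecS b s n v r y (evind _ _ _ H1) (evind _ _ _ H2)
  | eval_mu c v n H1 H2 => Hmu c v n (evind _ _ _ H1)
      (fun m hm => match H2 m hm with ex_intro _ k Hk => ex_intro _ k (evind _ _ _ Hk) end)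
  end
with evsind gs v ys (H : evals gs v ys) {struct H} : Q gs v ys :=
  match H in evals gs v ys return Q gs v ys with
  | evals_nil v => Hnil v
  | evals_cons g gs v y ys H1 H2 => Hcons g gs v y ys (evind _ _ _ H1) (evsind _ _ _ H2)
  end.
End Ind.

Lemma idx (x J : nat) T : In x T -> exists j, j < length T /\ nth j (T ++ [J]) 0 = x.
Proof. intros H. destruct (In_idx x T H) as [j [Hj Hx]]. exists j. split; auto. rewrite app_nth1; auto. Qed.
Lemma nth_last (J : nat) T : nth (length T) (T ++ [J]) 0 = J.
Proof. rewrite app_nth2 by lia. rewrite Nat.sub_diag. reflexivity. Qed.

Ltac sj := repeat (rewrite jk_mkj || rewrite jc_mkj || rewrite jv_mkj || rewrite jy_mkj || rewrite pfst_pr || rewrite psnd_pr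
   || rewrite hdc_cns || rewrite tl_cons); simpl enc; simpl encv;
   repeat (rewrite jk_mkj || rewrite jc_mkj || rewrite jv_mkj || rewrite jy_mkj || rewrite pfst_pr || rewrite psnd_pr
   || rewrite hdc_cns || rewrite tl_cons).

Ltac startJ := unfold JustL; cbv zeta; rewrite nth_last; sj.

Lemma collect (F : nat -> nat -> nat) n :
  (forall m, m < n -> exists y', y' <> 0 /\ exists T, vlist T /\ In (F m y') T) ->
  exists T, vlist T /\ forall m, m < n -> exists y', y' <> 0 /\ In (F m y') T.
Proof.
  induction n; intros H.
  - exists []. split. apply vlist_nil. intros; lia.
  - destruct IHn as [T1 [V1 H1]]. intros m Hm; apply H; lia.
    destruct (H n (Nat.lt_succ_diag_r n)) as [y' [Hy [T2 [V2 H2]]]].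
    exists (T1 ++ T2). split. apply vlist_app; auto.
    intros m Hm. destruct (Nat.eq_dec m n). subst. exists y'. split; auto. apply in_or_app; auto.
    destruct (H1 m ltac:(lia)) as [y'' [Hy'' Hi]]. exists y''. split; auto. apply in_or_app; auto.
Qed.

Lemma complete : forall c v y, eval c v y -> exists T, vlist T /\ In (mkj 0 (enc c) (encv v) y) T.
Proof.
  apply (evind (fun c v y => exists T, vlist T /\ In (mkj 0 (enc c) (encv v) y) T)
               (fun gs v ys => exists T, vlist T /\ In (mkj 1 (encv (map enc gs)) (encv v) (encv ys)) T)).
  - intros v. exists ([] ++ [mkj 0 (enc Zero) (encv v) 0]). split. 2: simpl; auto.
    apply vlist_snoc. apply vlist_nil. startJ. left. split. reflexivity. left. auto.
  - intros x v. exists ([] ++ [mkj 0 (enc Succ) (encv (x :: v)) (S x)]). split. 2: simpl; auto.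
    apply vlist_snoc. apply vlist_nil. startJ. left. split. reflexivity. right; left. split. reflexivity.
    split. unfold cns; lia. reflexivity.
  - intros i v Hi. exists ([] ++ [mkj 0 (enc (Proj i)) (encv v) (nth i v 0)]). split. 2: simpl; auto.
    apply vlist_snoc. apply vlist_nil. startJ. left. split. reflexivity. right; right; left. split. reflexivity.
    split. apply nthtl_encv_nz; auto. symmetry. apply nthc_encv.
  - intros h gs v ys y [T1 [V1 I1]] [T2 [V2 I2]].
    exists ((T1 ++ T2) ++ [mkj 0 (enc (Comp h gs)) (encv v) y]). split. 2: apply in_or_app; right; simpl; auto.
    apply vlist_snoc. apply vlist_app; auto. startJ. left. split. reflexivity. right; right; right; left. split. reflexivity.
    destruct (idx _ (mkj 0 (enc (Comp h gs)) (encv v) y) (T1 ++ T2) (in_or_app _ _ _ (or_introl I1))) as [j [Hj E1]].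
    destruct (idx _ (mkj 0 (enc (Comp h gs)) (encv v) y) (T1 ++ T2) (in_or_app _ _ _ (or_intror I2))) as [l [Hl E2]].
    exists j. split; auto. exists l. split; auto. cbn [enc encv] in E1, E2; rewrite E1, E2. sj. auto.
  - intros b s v y [T1 [V1 I1]].
    exists (T1 ++ [mkj 0 (enc (Prec b s)) (encv (0 :: v)) y]). split. 2: apply in_or_app; right; simpl; auto.
    apply vlist_snoc; auto. startJ. left. split. reflexivity. right; right; right; right; left. split. reflexivity.
    split. unfold cns; lia. split; auto.
    destruct (idx _ (mkj 0 (enc (Prec b s)) (encv (0 :: v)) y) T1 I1) as [j [Hj E1]].
    exists j; split; auto; cbn [enc encv] in E1; rewrite E1; sj; auto.
  - intros b s n v r y [T1 [V1 I1]] [T2 [V2 I2]].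
    exists ((T1 ++ T2) ++ [mkj 0 (enc (Prec b s)) (encv (S n :: v)) y]). split. 2: apply in_or_app; right; simpl; auto.
    apply vlist_snoc. apply vlist_app; auto. startJ. left. split. reflexivity. right; right; right; right; right; left. split. reflexivity.
    split. unfold cns; lia. split. auto.
    destruct (idx _ (mkj 0 (enc (Prec b s)) (encv (S n :: v)) y) (T1 ++ T2) (in_or_app _ _ _ (or_introl I1))) as [j [Hj E1]].
    destruct (idx _ (mkj 0 (enc (Prec b s)) (encv (S n :: v)) y) (T1 ++ T2) (in_or_app _ _ _ (or_intror I2))) as [l [Hl E2]].
    exists j. split; auto. exists l. split; auto. cbn [enc encv] in E1, E2; rewrite E1, E2. sj. simpl. auto.
  - intros c v n [T0 [V0 I0]] HM.
    destruct (collect (fun m y' => mkj 0 (enc c) (encv (m :: v)) y') n) as [T1 [V1 H1]].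
    { intros m Hm. destruct (HM m Hm) as [k [T [VT IT]]]. exists (S k). split. lia. exists T. auto. }
    exists ((T0 ++ T1) ++ [mkj 0 (enc (Mu c)) (encv v) n]). split. 2: apply in_or_app; right; simpl; auto.
    apply vlist_snoc. apply vlist_app; auto. startJ. left. split. reflexivity. right; right; right; right; right; right. split. reflexivity.
    split.
    + destruct (idx _ (mkj 0 (enc (Mu c)) (encv v) n) (T0 ++ T1) (in_or_app _ _ _ (or_introl I0))) as [j [Hj E1]].
      exists j; split; auto; cbn [enc encv] in E1; rewrite E1; sj; auto.
    + intros m Hm. destruct (H1 m Hm) as [y' [Hy' Im]].
      destruct (idx _ (mkj 0 (enc (Mu c)) (encv v) n) (T0 ++ T1) (in_or_app _ _ _ (or_intror Im))) as [j [Hj E1]].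
      exists j; split; auto; cbn [enc encv] in E1; rewrite E1; sj; auto.
  - intros v. exists ([] ++ [mkj 1 (encv (map enc [])) (encv v) (encv [])]). split. 2: simpl; auto.
    apply vlist_snoc. apply vlist_nil. startJ. right. split. reflexivity. left. auto.
  - intros g gs v y ys [T1 [V1 I1]] [T2 [V2 I2]].
    exists ((T1 ++ T2) ++ [mkj 1 (encv (map enc (g :: gs))) (encv v) (encv (y :: ys))]). split. 2: apply in_or_app; right; simpl; auto.
    apply vlist_snoc. apply vlist_app; auto. startJ. right. split. reflexivity. right.
    split. unfold cns; lia. split. unfold cns; lia.
    destruct (idx _ (mkj 1 (encv (map enc (g :: gs))) (encv v) (encv (y :: ys))) (T1 ++ T2) (in_or_app _ _ _ (or_introl I1))) as [j [Hj E1]].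
    destruct (idx _ (mkj 1 (encv (map enc (g :: gs))) (encv v) (encv (y :: ys))) (T1 ++ T2) (in_or_app _ _ _ (or_intror I2))) as [l [Hl E2]].
    exists j; split; auto; exists l; split; auto; cbn [enc encv map] in E1, E2; rewrite ?E1, ?E2; simpl; sj; auto.
Qed.

Lemma det : forall c v y, eval c v y -> forall y', eval c v y' -> y = y'.
Proof.
  apply (evind (fun c v y => forall y', eval c v y' -> y = y') (fun gs v ys => forall ys', evals gs v ys' -> ys = ys')).
  - intros v y' H. inversion H; auto.
  - intros x v y' H. inversion H; auto.
  - intros i v _ y' H. inversion H; auto.
  - intros h gs v ys y IH1 IH2 y' H. inversion H; subst. apply IH2. rewrite (IH1 ys0); auto.
  - intros b s v y IH y' H. inversion H; subst. auto.
  - intros b s n v r y IH1 IH2 y' H. inversion H; subst. apply IH2. rewrite (IH1 r0); auto.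
  - intros c v n IH1 IH2 y' H. inversion H as [| | | | | |c0 v0 n0 Ha Hb]; subst.
    destruct (Nat.lt_trichotomy n y') as [L|[L|L]]; auto.
    + destruct (Hb n L) as [k Hk]. specialize (IH1 _ Hk). discriminate.
    + destruct (IH2 y' L) as [k Hk]. specialize (Hk _ Ha). discriminate.
  - intros v ys' H. inversion H; auto.
  - intros g gs v y ys IH1 IH2 ys' H. inversion H; subst. f_equal; auto.
Qed.

Lemma min_exists (P : nat -> Prop) : (exists m, P m) -> exists m, P m /\ forall m', m' < m -> ~ P m'.
Proof.
  intros [m Hm]. induction m as [m IH] using Wf_nat.lt_wf_ind.
  destruct (classic (exists m', m' < m /\ P m')) as [[m' [H1 H2]]|H].
  - apply (IH m' H1 H2).
  - exists m. split; auto. intros m' H1 H2. apply H. exists m'. auto.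
Qed.

Definition BC m d := pr 0 (pr m d).
Definition XC e t d := pr 1 (pr e (S (pr t d))).

Ltac pp := repeat (rewrite pfst_pr || rewrite psnd_pr); cbn [ifz pred]; repeat (rewrite pfst_pr || rewrite psnd_pr).

Section Sn.
Variable v : nat -> nat -> nat.

Lemma S_BC0 m : Snat v (BC m 0) = BC m 0.
Proof. unfold Snat, BC. pp. reflexivity. Qed.
Lemma S_BCS m d : Snat v (BC m (S d)) = BC m d.
Proof. unfold Snat, BC. pp. reflexivity. Qed.
Lemma S_XR e : Snat v (Xe e) = Xe e.
Proof. unfold Snat, Xe. pp. reflexivity. Qed.
Lemma S_XC e t d : Snat v (XC e t d) =
  match v e t with 0 => XC e t d | S _ => match d with 0 => Xe e | S d' => XC e t d' end end.
Proof. unfold Snat, XC. pp.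
  destruct (v e t); simpl; auto. destruct d; simpl; auto. Qed.
Lemma S_OT x : 2 <= pfst x -> Snat v x = x.
Proof. intros H. unfold Snat. destruct (pfst x) as [|[|a]]; simpl; auto; lia. Qed.
End Sn.

Lemma shape x : (exists m d, x = BC m d) \/ (exists e, x = Xe e) \/ (exists e t d, x = XC e t d) \/ 2 <= pfst x.
Proof.
  rewrite <- (pr_surj x). rewrite pfst_pr.
  destruct (pfst x) as [|[|a]].
  - left. exists (pfst (psnd x)), (psnd (psnd x)). unfold BC. rewrite pr_surj. auto.
  - right. destruct (psnd (psnd x)) eqn:E.
    + left. exists (pfst (psnd x)). unfold Xe. rewrite <- E, pr_surj. auto.
    + right; left. exists (pfst (psnd x)), (pfst n), (psnd n). unfold XC. rewrite pr_surj, <- E, pr_surj. auto.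
  - right; right; right. lia.
Qed.

Lemma pfst_BC m d : pfst (BC m d) = 0. Proof. apply pfst_pr. Qed.
Lemma pfst_XR e : pfst (Xe e) = 1. Proof. apply pfst_pr. Qed.
Lemma pfst_XC e t d : pfst (XC e t d) = 1. Proof. apply pfst_pr. Qed.
Lemma BC_inj m d m' d' : BC m d = BC m' d' -> m = m' /\ d = d'.
Proof. unfold BC. intros H. apply pr_inj in H as [_ H]. apply pr_inj in H. auto. Qed.
Lemma XR_inj e e' : Xe e = Xe e' -> e = e'.
Proof. unfold Xe. intros H. apply pr_inj in H as [_ H]. apply pr_inj in H. tauto. Qed.
Lemma XC_inj e t d e' t' d' : XC e t d = XC e' t' d' -> e = e' /\ t = t' /\ d = d'.
Proof. unfold XC. intros H. apply pr_inj in H as [_ H]. apply pr_inj in H as [H1 H]. injection H as H.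
  apply pr_inj in H. tauto. Qed.
Lemma XR_XC e e' t d : Xe e <> XC e' t d.
Proof. unfold Xe, XC. intros H. apply pr_inj in H as [_ H]. apply pr_inj in H as [_ H]. discriminate. Qed.
Lemma BC_XR m d e : BC m d <> Xe e.
Proof. intros H. apply (f_equal pfst) in H. rewrite pfst_BC, pfst_XR in H. discriminate. Qed.
Lemma BC_XC m d e t d' : BC m d <> XC e t d'.
Proof. intros H. apply (f_equal pfst) in H. rewrite pfst_BC, pfst_XC in H. discriminate. Qed.

Section Pre.
Variable v : nat -> nat -> nat.
Hypothesis uniq : forall e t1 t2, v e t1 <> 0 -> v e t2 <> 0 -> t1 = t2.

Lemma Snat_pre y a : Snat v y = a ->
  (y = a /\ Snat v a = a) \/ (exists m d, y = BC m (S d) /\ a = BC m d) \/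
  (exists e t, v e t <> 0 /\ y = XC e t 0 /\ a = Xe e) \/
  (exists e t d, v e t <> 0 /\ y = XC e t (S d) /\ a = XC e t d).
Proof.
  intros H. destruct (shape y) as [[m [d E]]|[[e E]|[[e [t [d E]]]|E]]]; subst.
  - destruct d. rewrite S_BC0 in *. left. split; auto. rewrite S_BC0. auto.
    rewrite S_BCS. right; left. eauto.
  - rewrite S_XR in *. left. split; auto. apply S_XR.
  - rewrite S_XC in *. destruct (v e t) eqn:Ev.
    + left. split; auto. rewrite S_XC, Ev. auto.
    + destruct d. right; right; left. exists e, t. rewrite Ev. auto.
      right; right; right. exists e, t, d. rewrite Ev. auto.
  - rewrite S_OT in *; auto. left. subst. split; auto. apply S_OT; auto.
Qed.

Lemma mk_pc a l : NoDup l -> (forall y, Snat v y = a <-> In y l) -> preimg_count (Snat v) a (length l).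
Proof. intros. exists l. auto. Qed.

Ltac contra := match goal with
  | H : BC _ _ = Xe _ |- _ => exfalso; apply (BC_XR _ _ _ H)
  | H : Xe _ = BC _ _ |- _ => exfalso; symmetry in H; apply (BC_XR _ _ _ H)
  | H : BC _ _ = XC _ _ _ |- _ => exfalso; apply (BC_XC _ _ _ _ _ H)
  | H : XC _ _ _ = BC _ _ |- _ => exfalso; symmetry in H; apply (BC_XC _ _ _ _ _ H)
  | H : Xe _ = XC _ _ _ |- _ => exfalso; apply (XR_XC _ _ _ _ H)
  | H : XC _ _ _ = Xe _ |- _ => exfalso; symmetry in H; apply (XR_XC _ _ _ _ H)
  end.

Lemma pc_BC0 m : preimg_count (Snat v) (BC m 0) 2.
Proof.
  apply (mk_pc _ [BC m 0; BC m 1]).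
  - constructor. intros [H|[]]. apply BC_inj in H. lia. constructor. intros []. constructor.
  - intros y. split.
    + intros H. apply Snat_pre in H as [[H _]|[[m' [d [H1 H2]]]|[[e [t [_ [H1 H2]]]]|[e [t [d [_ [H1 H2]]]]]]]]; try contra.
      left; auto. apply BC_inj in H2 as [-> ->]. right; left; auto.
    + intros [H|[H|[]]]; subst. apply S_BC0. apply S_BCS.
Qed.

Lemma pc_BCS m d : preimg_count (Snat v) (BC m (S d)) 1.
Proof.
  apply (mk_pc _ [BC m (S (S d))]).
  - constructor. intros []. constructor.
  - intros y. split.
    + intros H. apply Snat_pre in H as [[H H']|[[m' [d' [H1 H2]]]|[[e [t [_ [H1 H2]]]]|[e [t [d' [_ [H1 H2]]]]]]]]; try contra.
      rewrite S_BCS in H'. apply BC_inj in H'. lia. apply BC_inj in H2 as [-> <-]. left; auto.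
    + intros [H|[]]; subst. apply S_BCS.
Qed.

Lemma pc_XR2 e t : v e t <> 0 -> preimg_count (Snat v) (Xe e) 2.
Proof.
  intros Ht. apply (mk_pc _ [Xe e; XC e t 0]).
  - constructor. intros [H|[]]. contra. constructor. intros []. constructor.
  - intros y. split.
    + intros H. apply Snat_pre in H as [[H _]|[[m' [d [H1 H2]]]|[[e' [t' [Hv [H1 H2]]]]|[e' [t' [d [_ [H1 H2]]]]]]]]; try contra.
      left; auto. apply XR_inj in H2. subst. rewrite (uniq _ _ _ Hv Ht). right; left; auto.
    + intros [H|[H|[]]]; subst. apply S_XR. rewrite S_XC. destruct (v e t); auto. lia.
Qed.

Lemma pc_XR1 e : (forall t, v e t = 0) -> preimg_count (Snat v) (Xe e) 1.
Proof.
  intros Ht. apply (mk_pc _ [Xe e]).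
  - constructor. intros []. constructor.
  - intros y. split.
    + intros H. apply Snat_pre in H as [[H _]|[[m' [d [H1 H2]]]|[[e' [t' [Hv [H1 H2]]]]|[e' [t' [d [_ [H1 H2]]]]]]]]; try contra.
      left; auto. apply XR_inj in H2. subst. rewrite Ht in Hv. lia.
    + intros [H|[]]; subst. apply S_XR.
Qed.

Lemma pc_XC0 e t d : v e t = 0 -> preimg_count (Snat v) (XC e t d) 1.
Proof.
  intros Ht. apply (mk_pc _ [XC e t d]).
  - constructor. intros []. constructor.
  - intros y. split.
    + intros H. apply Snat_pre in H as [[H _]|[[m' [d' [H1 H2]]]|[[e' [t' [Hv [H1 H2]]]]|[e' [t' [d' [Hv [H1 H2]]]]]]]]; try contra.
      left; auto. apply XC_inj in H2 as [-> [-> ->]]. rewrite Ht in Hv. lia.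
    + intros [H|[]]; subst. rewrite S_XC, Ht. auto.
Qed.

Lemma pc_XC1 e t d : v e t <> 0 -> preimg_count (Snat v) (XC e t d) 1.
Proof.
  intros Ht. apply (mk_pc _ [XC e t (S d)]).
  - constructor. intros []. constructor.
  - intros y. split.
    + intros H. apply Snat_pre in H as [[H H']|[[m' [d' [H1 H2]]]|[[e' [t' [Hv [H1 H2]]]]|[e' [t' [d' [Hv [H1 H2]]]]]]]]; try contra.
      * rewrite S_XC in H'. destruct (v e t). lia. destruct d. contra. apply XC_inj in H'. lia.
      * apply XC_inj in H2 as [-> [-> ->]]. left; auto.
    + intros [H|[]]; subst. rewrite S_XC. destruct (v e t). lia. auto.
Qed.

Lemma pc_OT x : 2 <= pfst x -> preimg_count (Snat v) x 1.
Proof.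
  intros Hx. apply (mk_pc _ [x]).
  - constructor. intros []. constructor.
  - intros y. split.
    + intros H. apply Snat_pre in H as [[H _]|[[m' [d' [H1 H2]]]|[[e' [t' [Hv [H1 H2]]]]|[e' [t' [d' [Hv [H1 H2]]]]]]]];
      subst; [left; auto | rewrite pfst_BC in Hx; lia | rewrite pfst_XR in Hx; lia | rewrite pfst_XC in Hx; lia].
    + intros [H|[]]; subst. apply S_OT; auto.
Qed.

Lemma Snat_21 : is_21_1 (Snat v).
Proof.
  intros a. destruct (shape a) as [[m [d E]]|[[e E]|[[e [t [d E]]]|E]]]; subst.
  - destruct d. right; apply pc_BC0. left; apply pc_BCS.
  - destruct (classic (exists t, v e t <> 0)) as [[t Ht]|Hn].
    right; apply (pc_XR2 e t Ht). left; apply pc_XR1. intros t. destruct (v e t) eqn:X; auto. exfalso; apply Hn; exists t; lia.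
  - destruct (v e t) eqn:X. left; apply pc_XC0; auto. left; apply pc_XC1; lia.
  - left; apply pc_OT; auto.
Qed.
End Pre.

Lemma uniq_f : forall e t1 t2, (fun _ _ : nat => 0) e t1 <> 0 -> (fun _ _ : nat => 0) e t2 <> 0 -> t1 = t2.
Proof. intros e t1 t2 H. cbv beta in H. lia. Qed.
Lemma uniq_g : forall e t1 t2, vg e t1 <> 0 -> vg e t2 <> 0 -> t1 = t2.
Proof.
  intros e t1 t2 H1 H2. apply VG_iff in H1 as [A1 B1]. apply VG_iff in H2 as [A2 B2].
  destruct (Nat.lt_trichotomy t1 t2) as [L|[L|L]]; auto.
  - exfalso. apply (B2 t1 L A1).
  - exfalso. apply (B1 t2 L A2).
Qed.

Lemma fS_21 : is_21_1 fS. Proof. apply Snat_21. apply uniq_f. Qed.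
Lemma gS_21 : is_21_1 gS. Proof. apply Snat_21. apply uniq_g. Qed.

Lemma iter_S_r (f : nat -> nat) k x : iter f (S k) x = iter f k (f x).
Proof. induction k; simpl in *; auto. Qed.

Lemma fS_BCS m d : fS (BC m (S d)) = BC m d. Proof. apply S_BCS. Qed.
Lemma iter_BC k m d : iter fS k (BC m (k + d)) = BC m d.
Proof.
  revert d. induction k; intros d. reflexivity.
  rewrite iter_S_r. replace (S k + d) with (S (k + d)) by lia. rewrite fS_BCS. apply IHk.
Qed.

Lemma fS_noZ : no_Z_chains fS.
Proof.
  intros x. destruct (shape x) as [[m [d E]]|[[e E]|[[e [t [d E]]]|E]]]; subst.
  - exists (BC m 0). split. exists d, 0. simpl. rewrite <- (iter_BC d m 0). f_equal. f_equal. lia.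
    exists 1. split. lia. simpl. apply S_BC0.
  - exists (Xe e). split. exists 0, 0. auto. exists 1. split. lia. simpl. apply S_XR.
  - exists (XC e t d). split. exists 0, 0. auto. exists 1. split. lia. simpl. unfold fS. rewrite S_XC. auto.
  - exists x. split. exists 0, 0. auto. exists 1. split. lia. simpl. unfold fS. apply S_OT; auto.
Qed.

Definition BETA := C3 IF (C1 FST (V 0)) (K 1) (C3 IF (C1 SND (C1 SND (V 0))) (K 1) (K 2)).
Lemma fS_beta : beta_computable fS.
Proof.
  exists (fun x => den BETA [x]). split. apply computable_den. vm_compute. reflexivity.
  intros a. unfold BETA. dstr. rewrite ?den_IF, ?den_FST, ?den_SND.
  destruct (shape a) as [[m [d E]]|[[e E]|[[e [t [d E]]]|E]]]; subst.
  - rewrite pfst_BC. unfold BC. rewrite !psnd_pr. destruct d. apply (pc_BC0 _). apply (pc_BCS _).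
  - rewrite pfst_XR. apply (pc_XR1 _). auto.
  - rewrite pfst_XC. apply (pc_XC0 _). auto.
  - destruct (pfst a) as [|a'] eqn:X. lia. apply (pc_OT _). lia.
Qed.

Lemma pc_unique f a k1 k2 : preimg_count f a k1 -> preimg_count f a k2 -> k1 = k2.
Proof.
  intros [l1 [N1 [L1 M1]]] [l2 [N2 [L2 M2]]]. subst.
  assert (incl l1 l2) by (intros y Hy; apply M2, M1, Hy).
  assert (incl l2 l1) by (intros y Hy; apply M1, M2, Hy).
  pose proof (NoDup_incl_length N1 H). pose proof (NoDup_incl_length N2 H0). lia.
Qed.

Lemma no_fix_tree (f : nat -> nat) r a b : f a = r -> a <> r -> in_tree f a b -> f b = b -> False.
Proof.
  intros Ha Hne [n Hn] Hb. assert (forall k, iter f k b = b) by (induction k; simpl; auto; rewrite IHk; auto).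
  rewrite H in Hn. subst b. apply Hne. congruence.
Qed.

Lemma notiso1 f r a : f r = r -> f a = r -> a <> r -> ~ tree_iso f r a.
Proof.
  intros Hr Ha Hne [h [H1 [H2 [H3 H4]]]].
  assert (Tr : in_tree f r r) by (exists 0; auto).
  assert (E : tree_edge f r r r) by (split; auto).
  apply (H4 r r Tr Tr) in E. destruct E as [T1 [_ E]]. apply (no_fix_tree f r a (h r)); auto.
Qed.

Lemma notiso2 f r a : f r = r -> f a = r -> a <> r -> ~ tree_iso f a r.
Proof.
  intros Hr Ha Hne [h [H1 [H2 [H3 H4]]]].
  assert (Tr : in_tree f r r) by (exists 0; auto).
  destruct (H3 r Tr) as [b [Tb Hb]].
  assert (E : tree_edge f r (h b) (h b)) by (rewrite Hb; split; auto).
  apply (H4 b b Tb Tb) in E. destruct E as [_ [_ E]]. apply (no_fix_tree f r a b); auto.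
Qed.

Lemma fS_iso : iso_computable fS.
Proof.
  exists Zero. intros x Hx x1 x2 Hne H1 H2. exists 0. split. constructor. split. auto.
  split. intros; discriminate. intros Hiso. exfalso.
  assert (XB : exists m, x = BC m 0).
  { destruct (shape x) as [[m [d E]]|[[e E]|[[e [t [d E]]]|E]]]; try rewrite E in Hx.
    - destruct d. eauto. pose proof (pc_unique _ _ _ _ Hx (pc_BCS _ m d)). discriminate.
    - pose proof (pc_unique _ _ _ _ Hx (pc_XR1 _ e (fun _ => eq_refl))). discriminate.
    - pose proof (pc_unique _ _ _ _ Hx (pc_XC0 _ e t d eq_refl)). discriminate.
    - pose proof (pc_unique _ _ _ _ Hx (pc_OT _ x E)). discriminate. }
  destruct XB as [m Ex]. rewrite Ex in *.
  assert (P : forall y, fS y = BC m 0 -> y = BC m 0 \/ y = BC m 1).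
  { intros y Hy. apply (Snat_pre _) in Hy as [[Hy _]|[[m' [d [Y1 Y2]]]|[[e [t [Hv _]]]|[e [t [d [Hv _]]]]]]]; auto; try lia.
    apply BC_inj in Y2 as [-> ->]. auto. }
  assert (F0 : fS (BC m 0) = BC m 0) by apply S_BC0.
  assert (F1 : BC m 1 <> BC m 0) by (intros E; apply BC_inj in E; lia).
  destruct (P x1 H1) as [-> | ->]; destruct (P x2 H2) as [-> | ->]; try contradiction.
  - apply (notiso1 fS (BC m 0) (BC m 1)); auto.
  - apply (notiso2 fS (BC m 0) (BC m 1)); auto.
Qed.

Section Enum.
Variable P : nat -> Prop.
Hypothesis inf : forall n, exists m, n <= m /\ P m.

Lemma least_ex n : exists m, (n <= m /\ P m) /\ forall m', m' < m -> ~ (n <= m' /\ P m').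
Proof. apply min_exists. apply inf. Qed.

Definition nx (n : nat) : nat := proj1_sig (constructive_indefinite_description _ (least_ex n)).
Lemma nx_spec n : (n <= nx n /\ P (nx n)) /\ forall m', m' < nx n -> ~ (n <= m' /\ P m').
Proof. unfold nx. destruct (constructive_indefinite_description _ (least_ex n)). simpl. auto. Qed.

Fixpoint en (k : nat) : nat := match k with 0 => nx 0 | S k' => nx (S (en k')) end.

Lemma en_P k : P (en k). Proof. destruct k; simpl; apply nx_spec. Qed.
Lemma en_S k : en k < en (S k). Proof. simpl. pose proof (nx_spec (S (en k))). lia. Qed.
Lemma en_mono k1 k2 : k1 < k2 -> en k1 < en k2.
Proof. induction 1. apply en_S. pose proof (en_S m). lia. Qed.
Lemma en_inj k1 k2 : en k1 = en k2 -> k1 = k2.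
Proof. intros H. destruct (Nat.lt_trichotomy k1 k2) as [L|[L|L]]; auto; apply en_mono in L; lia. Qed.
Lemma en_ge k : k <= en k. Proof. induction k. lia. pose proof (en_S k). lia. Qed.
Lemma en_surj m : P m -> exists k, en k = m.
Proof.
  intros Pm.
  assert (H0 : en 0 <= m). { simpl. destruct (nx_spec 0) as [_ H]. destruct (le_lt_dec (nx 0) m); auto. exfalso. apply (H m); auto. split; auto; lia. }
  assert (B : forall N, m < en N -> exists k, en k <= m < en (S k)).
  { induction N; intros HN. lia. destruct (le_lt_dec (en N) m). exists N. auto. apply IHN. auto. }
  destruct (B (S m)) as [k [K1 K2]]. pose proof (en_ge (S m)). lia.
  exists k. destruct (Nat.eq_dec (en k) m); auto. exfalso.
  simpl in K2. destruct (nx_spec (S (en k))) as [_ H]. apply (H m K2). split; auto. lia.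
Qed.
End Enum.

Lemma enum_inf (P : nat -> Prop) : (forall n, exists m, n <= m /\ P m) ->
  exists e : nat -> nat, (forall k, P (e k)) /\ (forall k1 k2, e k1 = e k2 -> k1 = k2) /\ (forall m, P m -> exists k, e k = m).
Proof. intros inf. exists (en P inf). split. apply en_P. split. apply en_inj. apply en_surj. Qed.

Definition PF x := pfst x <> 0.
Definition conv e := exists t, vg e t <> 0.
Definition CI o := pfst o = 0 \/ (pfst o = 1 /\ conv (psnd o)).
Definition PI y := 2 <= pfst y \/ (exists e, y = Xe e /\ ~ conv e) \/ (exists e t d, y = XC e t d /\ vg e t = 0).

Lemma fS_fix x : pfst x <> 0 -> fS x = x.
Proof.
  intros H. destruct (shape x) as [[m [d E]]|[[e E]|[[e [t [d E]]]|E]]]; subst.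
  - rewrite pfst_BC in H. lia.
  - apply S_XR.
  - unfold fS. rewrite S_XC. auto.
  - apply S_OT; auto.
Qed.
Lemma gS_PI y : PI y -> gS y = y.
Proof.
  intros [H|[[e [E _]]|[e [t [d [E Hv]]]]]]; subst.
  - apply S_OT; auto.
  - apply S_XR.
  - unfold gS. rewrite S_XC, Hv. auto.
Qed.
Lemma BC_surj x : pfst x = 0 -> x = BC (pfst (psnd x)) (psnd (psnd x)).
Proof. intros H. unfold BC. rewrite pr_surj, <- H, pr_surj. auto. Qed.

Section Iso.
Variables enP enQ enC tsel invP : nat -> nat.
Hypothesis Q1 : forall k, PI (enQ k).
Hypothesis Q2 : forall k1 k2, enQ k1 = enQ k2 -> k1 = k2.
Hypothesis Q3 : forall m, PI m -> exists k, enQ k = m.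
Hypothesis C1 : forall k, CI (enC k).
Hypothesis C2 : forall k1 k2, enC k1 = enC k2 -> k1 = k2.
Hypothesis C3 : forall m, CI m -> exists k, enC k = m.
Hypothesis T1 : forall e, conv e -> vg e (tsel e) <> 0.
Hypothesis I1 : forall x, PF x -> enP (invP x) = x.
Hypothesis I2 : forall k, PF (enP k).
Hypothesis I3 : forall k1 k2, enP k1 = enP k2 -> k1 = k2.

Lemma invP_enP k : invP (enP k) = k. Proof. apply I3. apply I1. apply I2. Qed.

Definition hC o d := match pfst o with 0 => BC (psnd o) d
  | S _ => match d with 0 => Xe (psnd o) | S d' => XC (psnd o) (tsel (psnd o)) d' end end.
Definition hh x := match pfst x with 0 => hC (enC (pfst (psnd x))) (psnd (psnd x)) | S _ => enQ (invP x) end.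

Lemma hh_BC m d : hh (BC m d) = hC (enC m) d.
Proof. unfold hh, BC. rewrite !pfst_pr, !psnd_pr, pfst_pr. reflexivity. Qed.
Lemma hh_PF x : pfst x <> 0 -> hh x = enQ (invP x).
Proof. intros H. unfold hh. destruct (pfst x); [lia|auto]. Qed.

Lemma hC_notPI o d : CI o -> ~ PI (hC o d).
Proof.
  intros [Ho|[Ho Hc]] HP; unfold hC in HP; rewrite Ho in HP.
  - destruct HP as [H|[[e [E _]]|[e [t [d' [E _]]]]]].
    rewrite pfst_BC in H; lia. apply (BC_XR _ _ _ E). apply (BC_XC _ _ _ _ _ E).
  - destruct d as [|d'].
    + destruct HP as [H|[[e [E H]]|[e [t [d' [E _]]]]]].
      rewrite pfst_XR in H; lia. apply XR_inj in E. subst. auto. apply (XR_XC _ _ _ _ E).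
    + destruct HP as [H|[[e [E H]]|[e [t [d'' [E Hv]]]]]].
      rewrite pfst_XC in H; lia. symmetry in E. apply (XR_XC _ _ _ _ E).
      apply XC_inj in E as [E1 [E2 E3]]. subst. apply (T1 _ Hc). auto.
Qed.

Lemma hC_inj o1 o2 d1 d2 : CI o1 -> CI o2 -> hC o1 d1 = hC o2 d2 -> o1 = o2 /\ d1 = d2.
Proof.
  intros H1 H2 E. unfold hC in E.
  assert (R0 : forall o, pfst o = 0 -> o = pr 0 (psnd o)) by (intros o Ho; rewrite <- Ho, pr_surj; auto).
  assert (R1 : forall o, pfst o = 1 -> o = pr 1 (psnd o)) by (intros o Ho; rewrite <- Ho, pr_surj; auto).
  destruct H1 as [A1|[A1 _]]; destruct H2 as [A2|[A2 _]]; rewrite A1, A2 in E.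
  - apply BC_inj in E as [E1 E2]. split; auto. rewrite (R0 o1), (R0 o2), E1; auto.
  - destruct d2; [apply BC_XR in E|apply BC_XC in E]; contradiction.
  - destruct d1; symmetry in E; [apply BC_XR in E|apply BC_XC in E]; contradiction.
  - destruct d1, d2.
    + apply XR_inj in E. split; auto. rewrite (R1 o1), (R1 o2), E; auto.
    + apply XR_XC in E. contradiction.
    + symmetry in E. apply XR_XC in E. contradiction.
    + apply XC_inj in E as [E1 [_ E3]]. split; auto. rewrite (R1 o1), (R1 o2), E1; auto.
Qed.

Lemma hh_iso : struct_iso fS gS hh.
Proof.
  split; [|split].
  - intros x1 x2 E.
    destruct (Nat.eq_dec (pfst x1) 0) as [A1|A1]; destruct (Nat.eq_dec (pfst x2) 0) as [A2|A2].
    + rewrite (BC_surj x1 A1), (BC_surj x2 A2) in *. rewrite !hh_BC in E.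
      apply hC_inj in E as [E1 E2]; [apply C2 in E1; rewrite E1, E2; reflexivity | apply C1 | apply C1].
    + rewrite (BC_surj x1 A1) in E. rewrite hh_BC, hh_PF in E by auto. exfalso.
      eapply hC_notPI; [apply C1|]. rewrite E. auto.
    + rewrite (BC_surj x2 A2) in E. rewrite hh_BC, hh_PF in E by auto. exfalso.
      eapply hC_notPI; [apply C1|]. rewrite <- E. auto.
    + rewrite !hh_PF in E by auto. apply Q2 in E. rewrite <- (I1 x1 A1), <- (I1 x2 A2), E. reflexivity.
  - intros y. destruct (shape y) as [[m [d E]]|[[e E]|[[e [t [d E]]]|E]]]; subst.
    + destruct (C3 (pr 0 m)) as [k Hk]. left. apply pfst_pr.
      exists (BC k d). rewrite hh_BC, Hk. unfold hC. rewrite pfst_pr, psnd_pr. auto.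
    + destruct (classic (conv e)) as [Hc|Hc].
      * destruct (C3 (pr 1 e)) as [k Hk]. right. rewrite pfst_pr, psnd_pr. auto.
        exists (BC k 0). rewrite hh_BC, Hk. unfold hC. rewrite pfst_pr, psnd_pr. auto.
      * destruct (Q3 (Xe e)) as [k Hk]. right; left; eauto.
        exists (enP k). rewrite hh_PF by apply I2. rewrite invP_enP. auto.
    + destruct (vg e t) eqn:Hv.
      * destruct (Q3 (XC e t d)) as [k Hk]. right; right; eauto.
        exists (enP k). rewrite hh_PF by apply I2. rewrite invP_enP. auto.
      * assert (Hc : conv e) by (exists t; lia).
        assert (Et : tsel e = t) by (apply (uniq_g e); auto; lia).
        destruct (C3 (pr 1 e)) as [k Hk]. right. rewrite pfst_pr, psnd_pr. auto.
        exists (BC k (S d)). rewrite hh_BC, Hk. unfold hC. rewrite pfst_pr, psnd_pr, Et. auto.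
    + destruct (Q3 y) as [k Hk]. left; auto.
      exists (enP k). rewrite hh_PF by apply I2. rewrite invP_enP. auto.
  - intros x. destruct (Nat.eq_dec (pfst x) 0) as [A|A].
    + rewrite (BC_surj x A). generalize (pfst (psnd x)) (psnd (psnd x)). intros m d.
      unfold fS, gS. destruct (C1 m) as [Ho|[Ho Hc]].
      * destruct d. rewrite S_BC0, hh_BC. unfold hC. rewrite Ho. symmetry. apply S_BC0.
        rewrite S_BCS, !hh_BC. unfold hC. rewrite Ho. symmetry. apply S_BCS.
      * destruct d. rewrite S_BC0, hh_BC. unfold hC. rewrite Ho. symmetry. apply S_XR.
        rewrite S_BCS, !hh_BC. unfold hC. rewrite Ho. rewrite S_XC.
        destruct (vg (psnd (enC m)) (tsel (psnd (enC m)))) eqn:Hv. exfalso; apply (T1 _ Hc Hv). auto.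
    + rewrite fS_fix by auto. rewrite hh_PF by auto. symmetry. apply gS_PI. apply Q1.
Qed.
End Iso.

Lemma iso_exists : exists h, struct_iso fS gS h.
Proof.
  destruct (enum_inf PF) as [enP [P1 [P2 P3]]].
  { intros n. exists (pr 1 n). split. apply pr_ge_r. unfold PF. rewrite pfst_pr. lia. }
  destruct (enum_inf PI) as [enQ [Q1 [Q2 Q3]]].
  { intros n. exists (pr 2 n). split. apply pr_ge_r. left. rewrite pfst_pr. lia. }
  destruct (enum_inf CI) as [enC [C1 [C2 C3]]].
  { intros n. exists (pr 0 n). split. apply pr_ge_r. left. rewrite pfst_pr. lia. }
  assert (Ht : forall e, exists t, conv e -> vg e t <> 0).
  { intros e. destruct (classic (conv e)) as [[t Ht]|Hn]. exists t; auto. exists 0; intros H; contradiction. }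
  assert (Hi : forall x, exists k, PF x -> enP k = x).
  { intros x. destruct (classic (PF x)) as [H|H]. destruct (P3 x H) as [k Hk]. exists k; auto. exists 0; intros; contradiction. }
  exists (hh enQ enC (fun e => proj1_sig (constructive_indefinite_description _ (Ht e)))
                     (fun x => proj1_sig (constructive_indefinite_description _ (Hi x)))).
  apply (hh_iso enP); auto.
  - intros e. destruct (constructive_indefinite_description _ (Ht e)). simpl. auto.
  - intros x. destruct (constructive_indefinite_description _ (Hi x)). simpl. auto.
Qed.

Lemma no_comp_iso : forall h, computable h -> ~ struct_iso fS gS h.
Proof.
  intros h [c Hc] [Hinj [Hsur Hcom]].
  set (e := enc c).
  destruct (Hsur (Xe e)) as [z Hz].
  assert (Fz : fS z = z).
  { apply Hinj. rewrite Hcom, Hz. apply S_XR. }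
  destruct (Nat.eq_dec (pfst z) 0) as [A|A].
  - pose proof (BC_surj z A) as Ez. remember (pfst (psnd z)) as m. remember (psnd (psnd z)) as d.
    destruct d as [|d].
    2: { exfalso. rewrite Ez in Fz. rewrite fS_BCS in Fz. apply BC_inj in Fz. lia. }
    assert (Fy : fS (BC m 1) = z) by (rewrite fS_BCS; auto).
    assert (Ny : h (BC m 1) <> Xe e).
    { intros E. rewrite <- Hz in E. apply Hinj in E. rewrite Ez in E. apply BC_inj in E. lia. }
    assert (G : gS (h (BC m 1)) = Xe e) by (rewrite <- Hcom, Fy; auto).
    apply (Snat_pre vg) in G as [[G _]|[[m' [d' [_ G]]]|[[e' [t [Hv [G1 G2]]]]|[e' [t [d' [_ [_ G]]]]]]]].
    + contradiction.
    + symmetry in G. apply BC_XR in G; auto.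
    + apply XR_inj in G2. subst e'. apply VG_iff in Hv as [[V1 [V2 [i [Hi1 [Hi2 Hi3]]]]] _].
      pose proof (sound _ V2 i) as S1. rewrite Hi3 in S1.
      assert (Ev : eval c [pfst t] (Xe e)) by (apply (Holds_0 _ _ _ S1); reflexivity).
      pose proof (det _ _ _ Ev _ (Hc (pfst t))) as D. rewrite <- Hz in D. apply Hinj in D.
      apply V1. rewrite <- D. auto.
    + apply XR_XC in G; auto.
  - assert (Ev : eval c [z] (Xe e)) by (rewrite <- Hz; apply Hc).
    destruct (complete _ _ _ Ev) as [T [VT IT]].
    assert (Hval : valet e (pr z (encv T))).
    { unfold valet. rewrite pfst_pr, psnd_pr. split. auto. split. apply valid_vlist. auto.
      destruct (In_idx _ _ IT) as [j [Hj Ej]]. exists j. split. pose proof (length_le_encv T). lia.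
      split. apply nthtl_encv_nz. auto. rewrite nthc_encv, Ej. reflexivity. }
    destruct (min_exists (valet e)) as [t0 [H0 H0m]]. eauto.
    assert (Vg : vg e t0 <> 0) by (apply VG_iff; split; auto).
    assert (G : gS (XC e t0 0) = Xe e) by (unfold gS; rewrite S_XC; destruct (vg e t0); [lia|auto]).
    destruct (Hsur (XC e t0 0)) as [x' Hx'].
    assert (Fx : fS x' = z).
    { apply Hinj. rewrite Hcom, Hx', G. auto. }
    assert (Nx : x' <> z).
    { intros E. subst x'. rewrite Hz in Hx'. apply (XR_XC _ _ _ _ Hx'). }
    apply (Snat_pre (fun _ _ => 0)) in Fx as [[F _]|[[m' [d' [_ F]]]|[[e' [t [Hv _]]]|[e' [t [d' [Hv _]]]]]]].
    + contradiction.
    + apply A. rewrite F. apply pfst_BC.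
    + apply Hv. reflexivity.
    + apply Hv. reflexivity.
Qed.

Theorem proposition3p3 :
  exists f : nat -> nat,
    computable f /\ is_21_1 f /\ no_Z_chains f /\
    beta_computable f /\ iso_computable f /\
    exists g : nat -> nat,
      computable g /\ is_21_1 g /\
      (exists h, struct_iso f g h) /\
      (forall h, computable h -> ~ struct_iso f g h).
Proof.
  exists fS. split. apply fS_computable. split. apply fS_21. split. apply fS_noZ.
  split. apply fS_beta. split. apply fS_iso.
  exists gS. split. apply gS_computable. split. apply gS_21. split. apply iso_exists. apply no_comp_iso.
Qed.
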